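(* Let $k\in\mathbb C$ with $\Re(k)<0$ and $\delta>0$. Let $f:\mathbb Q\to\mathbb C$ satisfy $f(x)=f(x+1)$ for $x\in\mathbb Q\setminus[-1,0]$, and let $h:\mathbb R\setminus\{0\}\to\mathbb C$ satisfy $h(x)=f(x)-|x|^{-k}f(-1/x)$ for $x\in\mathbb Q\cap([-1,1]\setminus\{0\})$, together with $$\sup_{\substack{x,y\in\mathbb R\setminus\{0\}\\ |x-y|<e^{-\varepsilon^{\delta-1}},\ |x|>2\varepsilon}}|h(x)-h(y)|=o(1)\quad(\varepsilon\to0^+),\qquad h(x)=O\big(e^{|x|^{\delta-1}}\big)\ \ (x\in[-1,1]\setminus\{0\}).$$ Then $f$ has property $\mathscr S(1+\delta)$.
   Context: For $x\in\mathbb R$ write $x=[b_0(x);b_1(x),\dots]$; $r(x)$ is the length of the minimal expansion for rational $x$, $r(x)=\infty$ otherwise. $\mathfrak T(B):=\{x\colon b_j(x)\leq\max(B,j(\log j)^2)\ \forall 1\leq j\leq r(x)\}$. For $x\in\mathfrak T(B)$, $V(B,m,x):=\{x'\in\mathbb Q\cap\mathfrak T(B)\colon r(x')\geq m,\ b_j(x')=b_j(x)\ \forall j\leq m\}$. Property $\mathscr S(\lambda)$: $\sup_{x\in\mathfrak T(m^\lambda)}\sup_{x',x''\in V(m^\lambda,m,x)}|f(x')-f(x'')|\to0$ as $m\to\infty$. *)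

(* Defs.v *)
From Stdlib Require Import Reals QArith Qreals.
From Coquelicot Require Import Coquelicot.
Open Scope R_scope.

Definition is_rat (x : R) : Prop := exists q : Q, x = Q2R q.

(* real power with complex exponent: t^s := exp(s ln t), for t > 0 *)
Definition rpow_c (t : R) (s : C) : C :=
  (exp (Re s * ln t) * cos (Im s * ln t), exp (Re s * ln t) * sin (Im s * ln t)).

(* Continued fraction algorithm: cf_rem x n = Some x_n (the n-th complete
   quotient, x_0 = x, x_{n+1} = 1 / frac(x_n)), or None if the expansion
   terminated before step n. *)
Fixpoint cf_rem (x : R) (n : nat) : option R :=
  match n with
  | O => Some x
  | S n' =>
      match cf_rem x n' with
      | None => None
      | Some y => if Req_EM_T (frac_part y) 0 then None else Some (/ frac_part y)
      end
  end.

(* b_n(x) = floor(x_n); conventionally 0 when n > r(x) *)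
Definition cf_digit (x : R) (n : nat) : Z :=
  match cf_rem x n with
  | Some y => Int_part y
  | None => 0%Z
  end.

(* r(x) = n : the (minimal) expansion of x is [b_0; b_1, ..., b_n] *)
Definition cf_len (x : R) (n : nat) : Prop :=
  exists y, cf_rem x n = Some y /\ frac_part y = 0.

Definition inT (B : R) (x : R) : Prop :=
  forall j : nat, (1 <= j)%nat -> cf_rem x j <> None ->
    IZR (cf_digit x j) <= Rmax B (INR j * (ln (INR j)) ^ 2).

Definition inV (B : R) (m : nat) (x x' : R) : Prop :=
  is_rat x' /\ inT B x' /\ (exists n, (m <= n)%nat /\ cf_len x' n) /\
  (forall j : nat, (j <= m)%nat -> cf_digit x' j = cf_digit x j).

(* Property S(lambda) for f (only its values at rationals matter) *)
Definition propS (lam : R) (f : R -> C) : Prop :=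
  forall eta : R, 0 < eta -> exists M : nat, forall m : nat, (M <= m)%nat ->
    forall x x' x'' : R, inT (Rpower (INR m) lam) x ->
      inV (Rpower (INR m) lam) m x x' -> inV (Rpower (INR m) lam) m x x'' ->
      Cmod (Cminus (f x') (f x'')) <= eta.

(* Main.v *)
Require Import Defs.
From Stdlib Require Import Reals QArith Qreals Lra Lia ZArith.
From Coquelicot Require Import Coquelicot.
Open Scope R_scope.


Lemma exp_mono (x y : R) : x <= y -> exp x <= exp y.
Proof. intros [H|H]; [left; apply exp_increasing; exact H| subst; lra]. Qed.

Lemma Rmin_Rmax_le (a b c : R) : Rmin a b <= c <= Rmax a b -> Rmin a b <= c /\ c <= Rmax a b.
Proof. auto. Qed.

Lemma exp_lip (x1 x2 : R) : x1 <= 0 -> x2 <= 0 -> Rabs (exp x1 - exp x2) <= Rabs (x1 - x2).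
Proof.
  intros H1 H2.
  destruct (MVT_abs exp exp x2 x1) as [c [Hc Hc2]].
  { intros c _. apply derivable_pt_lim_exp. }
  rewrite Hc. rewrite <- (Rmult_1_l (Rabs (x1 - x2))) at 2.
  apply Rmult_le_compat_r; [apply Rabs_pos|].
  rewrite Rabs_pos_eq by (left; apply exp_pos).
  rewrite <- exp_0. apply exp_mono.
  destruct Hc2 as [_ Hc2]. apply Rle_trans with (1 := Hc2).
  apply Rmax_lub; lra.
Qed.

Lemma cos_lip (x1 x2 : R) : Rabs (cos x1 - cos x2) <= Rabs (x1 - x2).
Proof.
  destruct (MVT_abs cos (fun t => - sin t) x2 x1) as [c [Hc Hc2]].
  { intros c _. apply derivable_pt_lim_cos. }
  rewrite Hc. rewrite <- (Rmult_1_l (Rabs (x1 - x2))) at 2.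
  apply Rmult_le_compat_r; [apply Rabs_pos|].
  rewrite Rabs_Ropp. apply Rabs_le. apply SIN_bound.
Qed.

Lemma sin_lip (x1 x2 : R) : Rabs (sin x1 - sin x2) <= Rabs (x1 - x2).
Proof.
  destruct (MVT_abs sin cos x2 x1) as [c [Hc Hc2]].
  { intros c _. apply derivable_pt_lim_sin. }
  rewrite Hc. rewrite <- (Rmult_1_l (Rabs (x1 - x2))) at 2.
  apply Rmult_le_compat_r; [apply Rabs_pos|].
  apply Rabs_le. apply COS_bound.
Qed.

Lemma ln_lip (lam t1 t2 : R) : 0 < lam -> lam <= t1 -> lam <= t2 ->
  Rabs (ln t1 - ln t2) <= Rabs (t1 - t2) / lam.
Proof.
  intros Hl H1 H2.
  destruct (MVT_abs ln (fun t => / t) t2 t1) as [c [Hc Hc2]].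
  { intros c [Hc _]. apply derivable_pt_lim_ln.
    assert (lam <= Rmin t2 t1) by (apply Rmin_glb; lra). lra. }
  rewrite Hc. unfold Rdiv. rewrite Rmult_comm.
  apply Rmult_le_compat_l; [apply Rabs_pos|].
  assert (lam <= Rmin t2 t1) by (apply Rmin_glb; lra).
  rewrite Rabs_pos_eq by (left; apply Rinv_0_lt_compat; lra).
  apply Rinv_le_contravar; lra.
Qed.

Lemma Cmod_le_sum (u v : R) : Cmod (u, v) <= Rabs u + Rabs v.
Proof.
  unfold Cmod. simpl.
  pose proof (Rabs_pos u). pose proof (Rabs_pos v).
  apply Rsqr_incr_0_var.
  - rewrite Rsqr_sqrt by nra. unfold Rsqr.
    assert (E: u * (u * 1) + v * (v * 1) = Rabs u * Rabs u + Rabs v * Rabs v).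
    { rewrite <- !Rabs_mult. rewrite !Rabs_pos_eq by nra. ring. }
    rewrite E. nra.
  - lra.
Qed.

Lemma Rabs_le_between (x a : R) : Rabs x <= a -> -a <= x <= a.
Proof.
  intros H. pose proof (Rle_abs x). pose proof (Rle_abs (- x)). rewrite Rabs_Ropp in H1. lra.
Qed.


Lemma Cmod_rpow (t : R) (s : C) : Cmod (rpow_c t s) = Rpower t (Re s).
Proof.
  unfold rpow_c, Cmod, Rpower. simpl.
  set (e := exp (Re s * ln t)). set (th := Im s * ln t).
  replace (e * cos th * (e * cos th * 1) + e * sin th * (e * sin th * 1))
    with (Rsqr e * (Rsqr (sin th) + Rsqr (cos th))) by (unfold Rsqr; ring).
  rewrite (sin2_cos2 th), Rmult_1_r. apply sqrt_Rsqr. left; apply exp_pos.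
Qed.

Lemma Rpower_le1 (t a : R) : 0 < t <= 1 -> 0 <= a -> Rpower t a <= 1.
Proof.
  intros Ht Ha. unfold Rpower. rewrite <- exp_0. apply exp_mono.
  assert (ln t <= 0). { rewrite <- ln_1. apply ln_le; lra. }
  nra.
Qed.

Lemma rpow_le1 (t : R) (s : C) : 0 < t <= 1 -> 0 <= Re s -> Cmod (rpow_c t s) <= 1.
Proof. intros. rewrite Cmod_rpow. apply Rpower_le1; auto. Qed.

Lemma rpow_lip (lam t1 t2 : R) (s : C) : 0 < lam -> lam <= t1 <= 1 -> lam <= t2 <= 1 ->
  0 <= Re s ->
  Cmod (Cminus (rpow_c t1 s) (rpow_c t2 s)) <= 2 * (Re s + Rabs (Im s)) * (Rabs (t1 - t2) / lam).
Proof.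
  intros Hl H1 H2 Hs.
  pose proof (ln_lip lam t1 t2 Hl (proj1 H1) (proj1 H2)) as HL.
  set (L1 := ln t1) in *. set (L2 := ln t2) in *.
  assert (HL1 : L1 <= 0). { unfold L1; rewrite <- ln_1. apply ln_le; lra. }
  assert (HL2 : L2 <= 0). { unfold L2; rewrite <- ln_1. apply ln_le; lra. }
  unfold rpow_c, Cminus. fold L1 L2.
  set (e1 := exp (Re s * L1)). set (e2 := exp (Re s * L2)).
  set (a1 := Im s * L1). set (a2 := Im s * L2).
  assert (He : Rabs (e1 - e2) <= Re s * Rabs (L1 - L2)).
  { unfold e1, e2. eapply Rle_trans. apply exp_lip; nra.
    replace (Re s * L1 - Re s * L2) with (Re s * (L1 - L2)) by ring.
    rewrite Rabs_mult, Rabs_pos_eq by lra. lra. }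
  assert (Ha : Rabs (a1 - a2) <= Rabs (Im s) * Rabs (L1 - L2)).
  { unfold a1, a2. replace (Im s * L1 - Im s * L2) with (Im s * (L1 - L2)) by ring.
    rewrite Rabs_mult. lra. }
  assert (He2 : 0 < e2 <= 1).
  { split. apply exp_pos. unfold e2. rewrite <- exp_0. apply exp_mono. nra. }
  assert (Hc : Rabs (e1 * cos a1 - e2 * cos a2) <= Rabs (e1 - e2) + Rabs (a1 - a2)).
  { replace (e1 * cos a1 - e2 * cos a2) with ((e1 - e2) * cos a1 + e2 * (cos a1 - cos a2)) by ring.
    eapply Rle_trans. apply Rabs_triang. rewrite !Rabs_mult.
    pose proof (cos_lip a1 a2). pose proof (Rabs_pos (e1 - e2)).
    assert (Rabs (cos a1) <= 1) by (apply Rabs_le; apply COS_bound).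
    rewrite (Rabs_pos_eq e2) by lra. pose proof (Rabs_pos (cos a1 - cos a2)). nra. }
  assert (Hsn : Rabs (e1 * sin a1 - e2 * sin a2) <= Rabs (e1 - e2) + Rabs (a1 - a2)).
  { replace (e1 * sin a1 - e2 * sin a2) with ((e1 - e2) * sin a1 + e2 * (sin a1 - sin a2)) by ring.
    eapply Rle_trans. apply Rabs_triang. rewrite !Rabs_mult.
    pose proof (sin_lip a1 a2). pose proof (Rabs_pos (e1 - e2)).
    assert (Rabs (sin a1) <= 1) by (apply Rabs_le; apply SIN_bound).
    rewrite (Rabs_pos_eq e2) by lra. pose proof (Rabs_pos (sin a1 - sin a2)). nra. }
  unfold Cplus, Copp. simpl.
  replace (e1 * cos a1 + - (e2 * cos a2)) with (e1 * cos a1 - e2 * cos a2) by ring.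
  replace (e1 * sin a1 + - (e2 * sin a2)) with (e1 * sin a1 - e2 * sin a2) by ring.
  eapply Rle_trans. apply Cmod_le_sum.
  pose proof (Rabs_pos (L1 - L2)). pose proof (Rabs_pos (Im s)).
  assert (Rabs (L1 - L2) <= Rabs (t1 - t2) / lam) by exact HL.
  nra.
Qed.


Lemma Rpower_ge1 (e n : R) : 1 <= e -> 0 <= n -> 1 <= Rpower e n.
Proof. intros. rewrite <- (Rpower_O e) by lra. apply Rle_Rpower; lra. Qed.

Lemma Rpower_pos (x y : R) : 0 < Rpower x y.
Proof. unfold Rpower. apply exp_pos. Qed.

Lemma growth1 (g A eps : R) : 0 <= g < 1 -> 0 <= A -> 0 < eps ->
  exists X, 1 <= X /\ forall x, X <= x -> A * Rpower x g <= eps * x.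
Proof.
  intros Hg HA He.
  set (X := Rpower (A / eps + 1) (/ (1 - g))).
  assert (HX1 : 1 <= X).
  { apply Rpower_ge1. assert (0 <= A / eps) by (apply Rdiv_le_0_compat; lra). lra.
    left; apply Rinv_0_lt_compat; lra. }
  exists X. split; auto. intros x Hx.
  assert (Hxp : 0 < x) by lra.
  assert (HXg : Rpower X (1 - g) = A / eps + 1).
  { unfold X. rewrite Rpower_mult. rewrite Rinv_l by lra. apply Rpower_1.
    assert (0 <= A / eps) by (apply Rdiv_le_0_compat; lra). lra. }
  assert (Hxg : A / eps + 1 <= Rpower x (1 - g)).
  { rewrite <- HXg. apply Rle_Rpower_l; lra. }
  assert (Ex : x = Rpower x (1 - g) * Rpower x g).
  { rewrite <- Rpower_plus. replace (1 - g + g) with 1 by ring. rewrite Rpower_1; lra. }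
  rewrite Ex at 2.
  pose proof (Rpower_pos x g).
  assert (EA : A = eps * (A / eps)) by (field; lra).
  set (u := Rpower x g) in *. set (v := Rpower x (1 - g)) in *. set (q := A / eps) in *.
  rewrite EA. assert (0 <= eps * u) by nra.
  assert (eps * u * (v - q) >= 0) by nra. nra.
Qed.

Lemma growth2 (g A eps : R) : 0 <= g < 1 -> 0 <= A -> 0 < eps ->
  exists C, 0 <= C /\ forall x, 1 <= x -> A * Rpower x g <= eps * x + C.
Proof.
  intros Hg HA He.
  destruct (growth1 g A eps Hg HA He) as [X [HX1 HX]].
  exists (A * Rpower X g). split.
  { pose proof (Rpower_pos X g). nra. }
  intros x Hx. destruct (Rle_dec X x) as [H|H].
  - specialize (HX x H). pose proof (Rpower_pos X g). nra.
  - assert (Rpower x g <= Rpower X g) by (apply Rle_Rpower_l; lra).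
    nra.
Qed.

Lemma ln_lt_self (y : R) : 0 < y -> ln y < y.
Proof.
  intros Hy. pose proof (exp_ineq1_le (ln y)). rewrite exp_ln in H by lra. lra.
Qed.

Lemma ln_le_pow (x b : R) : 0 < x -> 0 < b -> ln x <= Rpower x b / b.
Proof.
  intros Hx Hb. pose proof (ln_lt_self (Rpower x b) (Rpower_pos x b)).
  rewrite ln_Rpower in H. apply Rmult_le_reg_l with b; auto.
  field_simplify; [lra | lra].
Qed.

Lemma exists_nat_ge (X : R) : exists N : nat, X <= INR N.
Proof.
  destruct (INR_archimed 1 X) as [n Hn]; [lra|]. exists n. lra.
Qed.


Lemma is_rat_IZR (z : Z) : is_rat (IZR z).
Proof. exists (inject_Z z). unfold Q2R. simpl. field. Qed.

Lemma is_rat_INR (n : nat) : is_rat (INR n).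
Proof. rewrite INR_IZR_INZ. apply is_rat_IZR. Qed.

Lemma is_rat_plus x y : is_rat x -> is_rat y -> is_rat (x + y).
Proof. intros [p ->] [q ->]. exists (p + q)%Q. now rewrite Q2R_plus. Qed.

Lemma is_rat_opp x : is_rat x -> is_rat (- x).
Proof. intros [p ->]. exists (- p)%Q. now rewrite Q2R_opp. Qed.

Lemma is_rat_minus x y : is_rat x -> is_rat y -> is_rat (x - y).
Proof. intros. apply is_rat_plus; auto. now apply is_rat_opp. Qed.

Lemma is_rat_mult x y : is_rat x -> is_rat y -> is_rat (x * y).
Proof. intros [p ->] [q ->]. exists (p * q)%Q. now rewrite Q2R_mult. Qed.

Lemma is_rat_inv x : is_rat x -> is_rat (/ x).
Proof.
  intros [p ->]. destruct (Qeq_dec p 0) as [H|H].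
  - exists 0%Q. assert (Q2R p = 0). { rewrite H. unfold Q2R; simpl; field. }
    rewrite H0, Rinv_0. unfold Q2R; simpl; field.
  - exists (/ p)%Q. now rewrite Q2R_inv.
Qed.

Lemma is_rat_frac x : is_rat x -> is_rat (frac_part x).
Proof. intros. unfold frac_part. apply is_rat_minus; auto. apply is_rat_IZR. Qed.

Lemma is_rat_1 : is_rat 1.
Proof. apply (is_rat_IZR 1). Qed.

Definition Hper (f : R -> C) : Prop :=
  forall x, is_rat x -> ~ (-1 <= x <= 0) -> f x = f (x + 1).

Definition Hrel (f h : R -> C) (k : C) : Prop :=
  forall x, is_rat x -> x <> 0 -> -1 <= x <= 1 ->
     h x = Cminus (f x) (Cmult (rpow_c (Rabs x) (Copp k)) (f (- / x))).

Lemma shift_pos f : Hper f -> forall n : nat, forall z, is_rat z -> 0 < z -> f (z + INR n) = f z.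
Proof.
  intros Hp n. induction n as [|n IH]; intros z Hz Hz0.
  - simpl. now rewrite Rplus_0_r.
  - rewrite S_INR. rewrite <- (IH z Hz Hz0).
    replace (z + (INR n + 1)) with ((z + INR n) + 1) by ring.
    symmetry. apply Hp. apply is_rat_plus; auto; apply is_rat_INR.
    pose proof (pos_INR n). lra.
Qed.

Lemma shift_neg f : Hper f -> forall n : nat, forall z, is_rat z -> z < 0 -> f (z - INR n) = f z.
Proof.
  intros Hp n. induction n as [|n IH]; intros z Hz Hz0.
  - simpl. now rewrite Rminus_0_r.
  - rewrite S_INR. rewrite <- (IH z Hz Hz0).
    assert (E : z - INR n = (z - (INR n + 1)) + 1) by ring. rewrite E.
    apply Hp. apply is_rat_minus; auto. apply is_rat_plus; [apply is_rat_INR|apply is_rat_1].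
    pose proof (pos_INR n). lra.
Qed.

Lemma Int_part_ge1 y : 1 <= y -> (1 <= Int_part y)%Z.
Proof.
  intros Hy. destruct (base_Int_part y) as [H1 H2].
  assert (IZR (Int_part y) > y - 1) by lra.
  assert (0 < IZR (Int_part y)) by lra.
  apply lt_IZR in H0. lia.
Qed.

Lemma frac_decomp_nat y : 1 <= y -> y = frac_part y + INR (Z.to_nat (Int_part y)).
Proof.
  intros Hy. pose proof (Int_part_ge1 y Hy).
  rewrite INR_IZR_INZ, Znat.Z2Nat.id by lia. unfold frac_part. ring.
Qed.

Lemma base_fp' y : 0 <= frac_part y < 1.
Proof. destruct (base_fp y). lra. Qed.

Lemma reduce_pos f : Hper f -> forall y, is_rat y -> 1 < y ->
  f y = if Req_EM_T (frac_part y) 0 then f 1 else f (frac_part y).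
Proof.
  intros Hp y Hy Hy1. destruct (Req_EM_T (frac_part y) 0) as [E|E].
  - pose proof (Int_part_ge1 y (Rlt_le _ _ Hy1)).
    assert (y = 1 + INR (Z.to_nat (Int_part y - 1))).
    { rewrite INR_IZR_INZ, Znat.Z2Nat.id by lia. rewrite minus_IZR.
      pose proof (Rplus_Int_part_frac_part y). simpl. lra. }
    rewrite H0. apply shift_pos; auto. apply is_rat_1. lra.
  - rewrite (frac_decomp_nat y) at 1 by lra. apply shift_pos; auto.
    apply is_rat_frac; auto. pose proof (base_fp' y). lra.
Qed.

Lemma reduce_neg f : Hper f -> forall y, is_rat y -> 1 < y ->
  f (- y) = if Req_EM_T (frac_part y) 0 then f (-1) else f (- frac_part y).
Proof.
  intros Hp y Hy Hy1. destruct (Req_EM_T (frac_part y) 0) as [E|E].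
  - pose proof (Int_part_ge1 y (Rlt_le _ _ Hy1)).
    assert (- y = -1 - INR (Z.to_nat (Int_part y - 1))).
    { rewrite INR_IZR_INZ, Znat.Z2Nat.id by lia. rewrite minus_IZR.
      pose proof (Rplus_Int_part_frac_part y). simpl. lra. }
    rewrite H0. apply shift_neg; auto. apply is_rat_opp, is_rat_1. lra.
  - rewrite (frac_decomp_nat y) at 1 by lra.
    replace (- (frac_part y + INR (Z.to_nat (Int_part y)))) with
      (- frac_part y - INR (Z.to_nat (Int_part y))) by ring.
    apply shift_neg; auto.
    apply is_rat_opp, is_rat_frac; auto. pose proof (base_fp' y). lra.
Qed.


Definition chain (y : nat -> R) (n : nat) : Prop :=
  (forall j, (j <= n)%nat -> is_rat (y j) /\ 1 < y j) /\
  (forall j, (j < n)%nat -> frac_part (y j) <> 0 /\ y (S j) = / frac_part (y j)) /\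
  frac_part (y n) = 0 /\ y (S n) = 1.

Definition sg (s : R) (j : nat) : R := s * (-1) ^ j.
Definition pt (s : R) (y : nat -> R) (j : nat) : R := sg s j / y j.
Definition wt (k : C) (y : nat -> R) (j : nat) : C := rpow_c (/ y j) (Copp k).

Lemma sg_cases s j : (s = 1 \/ s = -1) -> sg s j = 1 \/ sg s j = -1.
Proof.
  intros Hs. unfold sg. induction j as [|j IH].
  - simpl. lra.
  - simpl. destruct IH as [E|E]; [right|left]; nra.
Qed.

Lemma sg_S s j : sg s (S j) = - sg s j.
Proof. unfold sg. simpl. ring. Qed.

Lemma chain_id (k : C) (f h : R -> C) (s : R) (y : nat -> R) (n : nat) :
  chain y n -> (s = 1 \/ s = -1) -> Hper f -> Hrel f h k ->
  forall j, (j <= n)%nat ->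
  f (pt s y j) = Cplus (h (pt s y j)) (Cmult (wt k y j) (f (pt s y (S j)))).
Proof.
  intros [Hc1 [Hc2 [Hc3 Hc4]]] Hs Hp Hr j Hj.
  destruct (Hc1 j Hj) as [Hyr Hy1].
  set (t := sg s j). assert (Ht : t = 1 \/ t = -1) by (apply sg_cases; auto).
  assert (Hts : sg s (S j) = - t) by (apply sg_S).
  assert (Hx : is_rat (pt s y j)).
  { unfold pt. fold t. apply is_rat_mult. destruct Ht as [-> | ->].
    apply is_rat_1. apply is_rat_opp, is_rat_1. apply is_rat_inv; auto. }
  assert (Hyp : 0 < y j) by lra.
  assert (Habs : Rabs (pt s y j) = / y j).
  { unfold pt; fold t. unfold Rdiv. rewrite Rabs_mult.
    rewrite Rabs_pos_eq with (x := / y j) by (left; apply Rinv_0_lt_compat; lra).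
    destruct Ht as [-> | ->]. rewrite Rabs_R1; ring. rewrite Rabs_left by lra; ring. }
  assert (Hinv : - / pt s y j = - t * y j).
  { unfold pt; fold t. destruct Ht as [-> | ->]; field; lra. }
  assert (Hkey : f (- / pt s y j) = f (pt s y (S j))).
  { rewrite Hinv. unfold pt. rewrite Hts.
    destruct (Nat.lt_ge_cases j n) as [Hlt | Heq].
    - destruct (Hc2 j Hlt) as [Hf Hyn]. rewrite Hyn.
      replace (- t / / frac_part (y j)) with (- t * frac_part (y j)) by (field; auto).
      destruct Ht as [-> | ->].
      + replace (- (1) * y j) with (- y j) by ring. rewrite reduce_neg; auto.
        destruct (Req_EM_T (frac_part (y j)) 0); [contradiction|].
        f_equal; ring.
      + replace (- -1 * y j) with (y j) by ring. rewrite reduce_pos; auto.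
        destruct (Req_EM_T (frac_part (y j)) 0); [contradiction|].
        f_equal; ring.
    - assert (j = n) by lia. subst j. rewrite Hc4.
      destruct Ht as [-> | ->].
      + replace (- (1) * y n) with (- y n) by ring. rewrite reduce_neg; auto.
        destruct (Req_EM_T (frac_part (y n)) 0); [|contradiction].
        f_equal; field.
      + replace (- -1 * y n) with (y n) by ring. rewrite reduce_pos; auto.
        destruct (Req_EM_T (frac_part (y n)) 0); [|contradiction].
        f_equal; field. }
  assert (Hne : pt s y j <> 0).
  { unfold pt; fold t. unfold Rdiv. apply Rmult_integral_contrapositive.
    split. destruct Ht as [-> | ->]; lra. apply Rinv_neq_0_compat; lra. }
  assert (Hrange : -1 <= pt s y j <= 1).
  { apply Rabs_le_between. rewrite Habs. assert (/ y j < 1).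
    { rewrite <- Rinv_1. apply Rinv_lt_contravar; lra. } lra. }
  rewrite (Hr _ Hx Hne Hrange). rewrite Habs, Hkey. unfold wt. unfold Cminus. ring.
Qed.


Fixpoint Pw (w : nat -> C) (j : nat) : C :=
  match j with O => 1%C | S j' => Cmult (Pw w j') (w j') end.

Lemma Cmod_diff_le (a b c : C) : Cmod (Cminus a c) <= Cmod (Cminus a b) + Cmod (Cminus b c).
Proof.
  replace (Cminus a c) with (Cplus (Cminus a b) (Cminus b c)) by (unfold Cminus; ring).
  apply Cmod_triangle.
Qed.

Lemma Pw_bound (w : nat -> C) (rho : R) (N : nat) : 0 < rho <= 1 ->
  (forall j, (j <= N)%nat -> Cmod (w j) <= 1) ->
  (forall j, (j + 1 <= N)%nat -> Cmod (w j) * Cmod (w (S j)) <= rho ^ 2) ->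
  forall j, (j <= N + 1)%nat -> rho * Cmod (Pw w j) <= rho ^ j.
Proof.
  intros Hr Hw1 Hw2.
  assert (forall j, ((j <= N + 1)%nat -> rho * Cmod (Pw w j) <= rho ^ j) /\
                    ((S j <= N + 1)%nat -> rho * Cmod (Pw w (S j)) <= rho ^ (S j))).
  { induction j as [|j [IH1 IH2]].
    - split; intros H.
      + simpl. rewrite Cmod_1. lra.
      + simpl. rewrite Cmod_mult, Cmod_1. specialize (Hw1 0%nat ltac:(lia)).
        pose proof (Cmod_ge_0 (w 0%nat)). nra.
    - split; auto. intros H.
      simpl Pw. rewrite !Cmod_mult.
      assert (Hj : (j <= N + 1)%nat) by lia.
      specialize (IH1 Hj). specialize (Hw2 j ltac:(lia)).
      pose proof (Cmod_ge_0 (w j)). pose proof (Cmod_ge_0 (w (S j))).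
      pose proof (Cmod_ge_0 (Pw w j)).
      replace (rho ^ S (S j)) with (rho ^ j * rho ^ 2) by (simpl; ring).
      assert (0 <= Cmod (w j) * Cmod (w (S j))) by nra.
      assert (rho * Cmod (Pw w j) * (Cmod (w j) * Cmod (w (S j))) <= rho ^ j * rho ^ 2).
      { apply Rmult_le_compat; auto. nra. }
      nra. }
  intros j Hj. apply (H j). auto.
Qed.

Lemma Pw_le1 (w : nat -> C) (J : nat) :
  (forall l, (l < J)%nat -> Cmod (w l) <= 1) -> forall j, (j <= J)%nat -> Cmod (Pw w j) <= 1.
Proof.
  intros Hw j. induction j as [|j IH]; intros Hj.
  - simpl. rewrite Cmod_1. lra.
  - simpl. rewrite Cmod_mult. specialize (IH ltac:(lia)). specialize (Hw j ltac:(lia)).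
    pose proof (Cmod_ge_0 (w j)). pose proof (Cmod_ge_0 (Pw w j)). nra.
Qed.

Lemma Pw_diff (w1 w2 : nat -> C) (J : nat) (Om : R) :
  (forall l, (l < J)%nat -> Cmod (w1 l) <= 1 /\ Cmod (w2 l) <= 1 /\ Cmod (Cminus (w1 l) (w2 l)) <= Om) ->
  forall j, (j <= J)%nat -> Cmod (Cminus (Pw w1 j) (Pw w2 j)) <= INR j * Om.
Proof.
  intros Hw j. induction j as [|j IH]; intros Hj.
  - simpl. replace (Cminus 1 1) with (RtoC 0) by (unfold Cminus; ring). rewrite Cmod_0. lra.
  - simpl Pw. specialize (IH ltac:(lia)). destruct (Hw j ltac:(lia)) as [H1 [H2 H3]].
    assert (Hp1 : Cmod (Pw w1 j) <= 1).
    { apply (Pw_le1 w1 J); [intros l Hl; apply (Hw l Hl) | lia]. }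
    replace (Cminus (Cmult (Pw w1 j) (w1 j)) (Cmult (Pw w2 j) (w2 j))) with
      (Cplus (Cmult (Pw w1 j) (Cminus (w1 j) (w2 j))) (Cmult (Cminus (Pw w1 j) (Pw w2 j)) (w2 j)))
      by (unfold Cminus; ring).
    eapply Rle_trans. apply Cmod_triangle. rewrite !Cmod_mult.
    rewrite S_INR.
    pose proof (Cmod_ge_0 (Cminus (w1 j) (w2 j))). pose proof (Cmod_ge_0 (Pw w1 j)).
    pose proof (Cmod_ge_0 (w2 j)). pose proof (Cmod_ge_0 (Cminus (Pw w1 j) (Pw w2 j))).
    assert (Cmod (Pw w1 j) * Cmod (Cminus (w1 j) (w2 j)) <= Om) by nra.
    assert (Cmod (Cminus (Pw w1 j) (Pw w2 j)) * Cmod (w2 j) <= INR j * Om) by nra.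
    lra.
Qed.

Lemma pow_mu_ge (rho mu : R) (j : nat) : 0 < rho -> 1 <= mu -> rho ^ j <= (rho * mu) ^ j.
Proof.
  intros. rewrite Rpow_mult_distr. pose proof (pow_R1_Rle mu j H0).
  pose proof (pow_lt rho j H). nra.
Qed.

Lemma tail_bound (F H w : nat -> C) (n : nat) (rho mu M C0 : R) :
  0 < rho -> 1 <= mu -> rho * mu < 1 -> 0 <= M -> 0 <= C0 ->
  (forall j, (j <= n)%nat -> F j = Cplus (H j) (Cmult (w j) (F (S j)))) ->
  (forall j, (j <= n + 1)%nat -> rho * Cmod (Pw w j) <= rho ^ j) ->
  (forall j, (j <= n)%nat -> Cmod (H j) <= M * mu ^ j) ->
  Cmod (F (S n)) <= C0 ->
  forall j, (j <= n + 1)%nat ->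
    Cmod (Cmult (Pw w j) (F j)) <= (M / rho / (1 - rho * mu) + C0 / rho) * (rho * mu) ^ j.
Proof.
  intros Hr Hm Hrm HM HC0 Hid HP HH HF.
  set (r := rho * mu) in *. set (c := M / rho / (1 - r) + C0 / rho).
  assert (Hc1 : M / rho <= c * (1 - r)).
  { unfold c. field_simplify; [|lra|lra].
    assert (0 <= C0 * (1 - r) / rho). { apply Rdiv_le_0_compat; nra. }
    unfold Rdiv in *. nra. }
  assert (Hcpos : 0 <= c).
  { unfold c. assert (0 <= M / rho / (1 - r)) by (repeat apply Rdiv_le_0_compat; lra).
    assert (0 <= C0 / rho) by (apply Rdiv_le_0_compat; lra). lra. }
  assert (forall d, (d <= n + 1)%nat -> Cmod (Cmult (Pw w (n + 1 - d)%nat) (F (n + 1 - d)%nat)) <= c * r ^ (n + 1 - d)).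
  { induction d as [|d IH]; intros Hd.
    - replace (n + 1 - 0)%nat with (S n) by lia. rewrite Cmod_mult.
      specialize (HP (S n) ltac:(lia)).
      pose proof (pow_mu_ge rho mu (S n) Hr Hm). fold r in H0.
      pose proof (Cmod_ge_0 (Pw w (S n))). pose proof (Cmod_ge_0 (F (S n))).
      assert (Cmod (Pw w (S n)) <= r ^ S n / rho).
      { apply Rmult_le_reg_l with rho; auto. field_simplify; lra. }
      assert (Cmod (Pw w (S n)) * Cmod (F (S n)) <= r ^ S n / rho * C0).
      { apply Rmult_le_compat; auto. }
      unfold c. assert (0 <= M / rho / (1 - r) * r ^ S n).
      { apply Rmult_le_pos. repeat apply Rdiv_le_0_compat; lra. apply pow_le. unfold r; nra. }
      assert (r ^ S n / rho * C0 = C0 / rho * r ^ S n) by (field; lra). nra.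
    - set (j := (n + 1 - S d)%nat).
      assert (Hj : (j <= n)%nat) by lia.
      assert (Ej : (n + 1 - d)%nat = S j) by lia.
      rewrite Ej in IH. specialize (IH ltac:(lia)).
      rewrite (Hid j Hj).
      replace (Cmult (Pw w j) (Cplus (H j) (Cmult (w j) (F (S j))))) with
        (Cplus (Cmult (Pw w j) (H j)) (Cmult (Pw w (S j)) (F (S j)))) by (simpl; ring).
      eapply Rle_trans. apply Cmod_triangle.
      rewrite Cmod_mult.
      specialize (HP j ltac:(lia)). specialize (HH j Hj).
      pose proof (Cmod_ge_0 (Pw w j)). pose proof (Cmod_ge_0 (H j)).
      assert (Cmod (Pw w j) <= rho ^ j / rho).
      { apply Rmult_le_reg_l with rho; auto. field_simplify; lra. }
      assert (Cmod (Pw w j) * Cmod (H j) <= rho ^ j / rho * (M * mu ^ j)).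
      { apply Rmult_le_compat; auto. }
      assert (E1 : rho ^ j / rho * (M * mu ^ j) = M / rho * r ^ j).
      { unfold r. rewrite Rpow_mult_distr. field. lra. }
      assert (0 <= r ^ j) by (apply pow_le; unfold r; nra).
      assert (c * r ^ S j = c * r * r ^ j) by (simpl; ring).
      assert (M / rho * r ^ j <= c * (1 - r) * r ^ j) by (apply Rmult_le_compat_r; auto).
      nra. }
  intros j Hj. replace j with (n + 1 - (n + 1 - j))%nat by lia. apply H0. lia.
Qed.

Lemma front_bound (F1 H1 w1 F2 H2 w2 : nat -> C) (n1 n2 L : nat) (rho eta1 Z : R) :
  0 < rho < 1 -> 0 <= eta1 ->
  (forall j, (j <= n1)%nat -> F1 j = Cplus (H1 j) (Cmult (w1 j) (F1 (S j)))) ->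
  (forall j, (j <= n2)%nat -> F2 j = Cplus (H2 j) (Cmult (w2 j) (F2 (S j)))) ->
  (L <= n1 + 1)%nat -> (L <= n2 + 1)%nat ->
  (forall j, (j < L)%nat -> Cmod (Cminus (H1 j) (H2 j)) <= eta1) ->
  (forall j, (j < L)%nat -> rho * Cmod (Pw w1 j) <= rho ^ j) ->
  (forall j, (j < L)%nat -> Cmod (Cminus (Pw w1 j) (Pw w2 j)) * Cmod (H2 j) <= Z) ->
  Cmod (Cminus (F1 0%nat) (F2 0%nat)) <=
    eta1 / (rho * (1 - rho)) + INR L * Z + Cmod (Cmult (Pw w1 L) (F1 L)) + Cmod (Cmult (Pw w2 L) (F2 L)).
Proof.
  intros Hr He Hid1 Hid2 HL1 HL2 HH HP HZ.
  assert (Hinv : forall L', (L' <= L)%nat ->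
    Cmod (Cminus (F1 0%nat) (F2 0%nat)) <= eta1 * (1 - rho ^ L') / (rho * (1 - rho)) + INR L' * Z +
       Cmod (Cminus (Cmult (Pw w1 L') (F1 L')) (Cmult (Pw w2 L') (F2 L')))).
  { induction L' as [|L' IH]; intros HL'.
    - simpl. replace (Cminus (Cmult 1 (F1 0%nat)) (Cmult 1 (F2 0%nat))) with (Cminus (F1 0%nat) (F2 0%nat))
        by (unfold Cminus; ring).
      replace (eta1 * (1 - 1) / (rho * (1 - rho)) + 0 * Z) with 0 by (field; lra). lra.
    - specialize (IH ltac:(lia)).
      rewrite (Hid1 L' ltac:(lia)) in IH. rewrite (Hid2 L' ltac:(lia)) in IH.
      replace (Cminus (Cmult (Pw w1 L') (Cplus (H1 L') (Cmult (w1 L') (F1 (S L')))))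
                      (Cmult (Pw w2 L') (Cplus (H2 L') (Cmult (w2 L') (F2 (S L'))))))
        with (Cplus (Cplus (Cmult (Pw w1 L') (Cminus (H1 L') (H2 L')))
                           (Cmult (Cminus (Pw w1 L') (Pw w2 L')) (H2 L')))
                    (Cminus (Cmult (Pw w1 (S L')) (F1 (S L'))) (Cmult (Pw w2 (S L')) (F2 (S L')))))
        in IH by (simpl; unfold Cminus; ring).
      pose proof (Cmod_triangle (Cplus (Cmult (Pw w1 L') (Cminus (H1 L') (H2 L')))
                           (Cmult (Cminus (Pw w1 L') (Pw w2 L')) (H2 L')))
                    (Cminus (Cmult (Pw w1 (S L')) (F1 (S L'))) (Cmult (Pw w2 (S L')) (F2 (S L'))))).
      pose proof (Cmod_triangle (Cmult (Pw w1 L') (Cminus (H1 L') (H2 L')))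
                           (Cmult (Cminus (Pw w1 L') (Pw w2 L')) (H2 L'))).
      rewrite !Cmod_mult in H0.
      specialize (HH L' ltac:(lia)). specialize (HP L' ltac:(lia)). specialize (HZ L' ltac:(lia)).
      pose proof (Cmod_ge_0 (Pw w1 L')). pose proof (Cmod_ge_0 (Cminus (H1 L') (H2 L'))).
      assert (Cmod (Pw w1 L') * Cmod (Cminus (H1 L') (H2 L')) <= rho ^ L' / rho * eta1).
      { apply Rmult_le_compat; auto. apply Rmult_le_reg_l with rho; [lra|]. field_simplify; lra. }
      assert (E : eta1 * (1 - rho ^ L') / (rho * (1 - rho)) + rho ^ L' / rho * eta1 =
                  eta1 * (1 - rho ^ S L') / (rho * (1 - rho))) by (simpl; field; lra).
      rewrite S_INR. lra. }
  specialize (Hinv L (le_n L)).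
  eapply Rle_trans. exact Hinv.
  pose proof (Cmod_diff_le (Cmult (Pw w1 L) (F1 L)) 0%C (Cmult (Pw w2 L) (F2 L))).
  replace (Cminus (Cmult (Pw w1 L) (F1 L)) 0%C) with (Cmult (Pw w1 L) (F1 L)) in H by (unfold Cminus; ring).
  replace (Cminus 0%C (Cmult (Pw w2 L) (F2 L))) with (Copp (Cmult (Pw w2 L) (F2 L))) in H by (unfold Cminus; ring).
  rewrite Cmod_opp in H.
  assert (eta1 * (1 - rho ^ L) / (rho * (1 - rho)) <= eta1 / (rho * (1 - rho))).
  { unfold Rdiv. apply Rmult_le_compat_r. left; apply Rinv_0_lt_compat; nra.
    pose proof (pow_le rho L). nra. }
  lra.
Qed.


Lemma chain_gt1 y n j : chain y n -> (j <= S n)%nat -> 1 <= y j.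
Proof.
  intros [H1 [_ [_ H4]]] Hj. destruct (Nat.eq_dec j (S n)) as [->|Hne].
  - rewrite H4; lra.
  - destruct (H1 j ltac:(lia)). lra.
Qed.

Lemma chain_prod2 y n j : chain y n -> (j <= n)%nat -> 2 <= y j * y (S j).
Proof.
  intros Hc Hj. pose proof Hc as [H1 [H2 [H3 H4]]].
  destruct (H1 j Hj) as [_ Hy].
  pose proof (Int_part_ge1 (y j) (Rlt_le _ _ Hy)) as HI.
  pose proof (Rplus_Int_part_frac_part (y j)) as Hd.
  destruct (Nat.eq_dec j n) as [->|Hne].
  - rewrite H4, H3 in *. rewrite Rplus_0_r in Hd.
    assert (Int_part (y n) <> 1%Z). { intro E. rewrite E in Hd. simpl in Hd. lra. }
    assert (2 <= IZR (Int_part (y n))) by (apply IZR_le; lia). lra.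
  - destruct (H2 j ltac:(lia)) as [Hf Hs].
    pose proof (chain_gt1 y n (S j) Hc ltac:(lia)).
    apply IZR_le in HI.
    assert (frac_part (y j) = / y (S j)). { rewrite Hs. rewrite Rinv_inv. auto. }
    assert (y j >= 1 + / y (S j)) by lra.
    assert (Hm : y j * y (S j) >= (1 + / y (S j)) * y (S j)) by (apply Rle_ge; apply Rmult_le_compat_r; lra).
    replace ((1 + / y (S j)) * y (S j)) with (y (S j) + 1) in Hm by (field; lra). lra.
Qed.

Lemma chain_close y1 n1 y2 n2 N0 : chain y1 n1 -> chain y2 n2 -> (N0 <= n1)%nat -> (N0 <= n2)%nat ->
  (forall j, (j < N0)%nat -> Int_part (y1 j) = Int_part (y2 j)) ->
  forall j, (j <= N0)%nat -> Rabs (/ y1 j - / y2 j) * 2 ^ N0 <= 2 ^ (S j).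
Proof.
  intros Hc1 Hc2 HN1 HN2 HI.
  set (e := fun j => Rabs (/ y1 j - / y2 j)).
  assert (Hstep : forall j, (j < N0)%nat -> e j * (y1 j * y2 j) = e (S j)).
  { intros j Hj. unfold e. destruct Hc1 as [A1 [B1 _]]. destruct Hc2 as [A2 [B2 _]].
    destruct (A1 j ltac:(lia)) as [_ Ha1]. destruct (A2 j ltac:(lia)) as [_ Ha2].
    destruct (B1 j ltac:(lia)) as [_ Hb1]. destruct (B2 j ltac:(lia)) as [_ Hb2].
    rewrite Hb1, Hb2, !Rinv_inv.
    unfold frac_part. rewrite (HI j Hj).
    replace (y1 j - IZR (Int_part (y2 j)) - (y2 j - IZR (Int_part (y2 j)))) with (y1 j - y2 j) by ring.
    rewrite <- (Rabs_pos_eq (y1 j * y2 j)) by nra. rewrite <- Rabs_mult.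
    replace ((/ y1 j - / y2 j) * (y1 j * y2 j)) with (- (y1 j - y2 j)) by (field; lra). apply Rabs_Ropp. }
  assert (He0 : forall j, 0 <= e j) by (intros; apply Rabs_pos).
  assert (Htop : e N0 <= 1).
  { unfold e. destruct Hc1 as [A1 _]. destruct Hc2 as [A2 _].
    destruct (A1 N0 HN1) as [_ Ha1]. destruct (A2 N0 HN2) as [_ Ha2].
    assert (0 < / y1 N0 < 1). { split. apply Rinv_0_lt_compat; lra. rewrite <- Rinv_1. apply Rinv_lt_contravar; lra. }
    assert (0 < / y2 N0 < 1). { split. apply Rinv_0_lt_compat; lra. rewrite <- Rinv_1. apply Rinv_lt_contravar; lra. }
    apply Rabs_le; lra. }
  assert (Hone : forall j, (j < N0)%nat -> e j <= e (S j)).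
  { intros j Hj. rewrite <- (Hstep j Hj).
    destruct Hc1 as [A1 _]. destruct Hc2 as [A2 _].
    destruct (A1 j ltac:(lia)) as [_ Ha1]. destruct (A2 j ltac:(lia)) as [_ Ha2].
    pose proof (He0 j). assert (1 <= y1 j * y2 j) by nra.
    assert (e j * 1 <= e j * (y1 j * y2 j)) by (apply Rmult_le_compat_l; lra). lra. }
  assert (Htwo : forall j, (S j < N0)%nat -> 4 * e j <= e (S (S j))).
  { intros j Hj. rewrite <- (Hstep (S j) Hj), <- (Hstep j ltac:(lia)).
    pose proof (chain_prod2 y1 n1 j Hc1 ltac:(lia)).
    pose proof (chain_prod2 y2 n2 j Hc2 ltac:(lia)).
    pose proof (He0 j).
    assert (4 <= (y1 j * y1 (S j)) * (y2 j * y2 (S j))) by nra.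
    replace (e j * (y1 j * y2 j) * (y1 (S j) * y2 (S j))) with
      (e j * ((y1 j * y1 (S j)) * (y2 j * y2 (S j)))) by ring. nra. }
  assert (Hp : forall d, (d <= N0)%nat ->
     (e (N0 - d)%nat * 2 ^ N0 <= 2 ^ (S (N0 - d))) /\
     ((S d <= N0)%nat -> e (N0 - S d)%nat * 2 ^ N0 <= 2 ^ (S (N0 - S d)))).
  { induction d as [|d IH]; intros Hd.
    - replace (N0 - 0)%nat with N0 by lia. split.
      + simpl. pose proof (pow_le 2 N0 ltac:(lra)). nra.
      + intros H. replace (S (N0 - 1)) with N0 by lia.
        pose proof (Hone (N0 - 1)%nat ltac:(lia)). replace (S (N0 - 1)) with N0 in H0 by lia.
        pose proof (pow_le 2 N0 ltac:(lra)). nra.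
    - destruct (IH ltac:(lia)) as [IH1 IH2].
      split. apply IH2. lia.
      intros H.
      pose proof (Htwo (N0 - S (S d))%nat ltac:(lia)).
      replace (S (S (N0 - S (S d)))) with (N0 - d)%nat in H0 by lia.
      replace (2 ^ S (N0 - d)) with (4 * 2 ^ S (N0 - S (S d))) in IH1.
      2:{ replace (S (N0 - d)) with (S (S (S (N0 - S (S d))))) by lia. simpl. ring. }
      pose proof (pow_le 2 N0 ltac:(lra)). nra. }
  intros j Hj. replace j with (N0 - (N0 - j))%nat by lia. apply Hp. lia.
Qed.


Lemma inv_in01 (y : R) : 1 <= y -> 0 < / y <= 1.
Proof.
  intros. split. apply Rinv_0_lt_compat; lra. rewrite <- Rinv_1. apply Rinv_le_contravar; lra.
Qed.

Lemma wt_mod k y j : Cmod (wt k y j) = Rpower (/ y j) (- Re k).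
Proof. unfold wt. rewrite Cmod_rpow. reflexivity. Qed.

Lemma wt_le1 k y n j : Re k < 0 -> chain y n -> (j <= S n)%nat -> Cmod (wt k y j) <= 1.
Proof.
  intros Hk Hc Hj. rewrite wt_mod. apply Rpower_le1; [|lra].
  apply inv_in01. apply (chain_gt1 y n j Hc Hj).
Qed.

Lemma wt_prod k y n j : Re k < 0 -> chain y n -> (j <= n)%nat ->
  Cmod (wt k y j) * Cmod (wt k y (S j)) <= Rpower (/ 2) (- Re k).
Proof.
  intros Hk Hc Hj. rewrite !wt_mod.
  pose proof (chain_gt1 y n j Hc ltac:(lia)). pose proof (chain_gt1 y n (S j) Hc ltac:(lia)).
  pose proof (chain_prod2 y n j Hc Hj).
  rewrite Rpower_mult_distr by (apply Rinv_0_lt_compat; lra).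
  apply Rle_Rpower_l; [lra|]. split.
  - apply Rmult_lt_0_compat; apply Rinv_0_lt_compat; lra.
  - rewrite <- Rinv_mult. apply Rinv_le_contravar; lra.
Qed.

Lemma wt_lip k y1 y2 j lam : Re k < 0 -> 0 < lam -> lam <= / y1 j -> lam <= / y2 j ->
  1 <= y1 j -> 1 <= y2 j ->
  Cmod (Cminus (wt k y1 j) (wt k y2 j)) <= 2 * (- Re k + Rabs (Im k)) * (Rabs (/ y1 j - / y2 j) / lam).
Proof.
  intros Hk Hl H1 H2 Hy1 Hy2. unfold wt.
  pose proof (inv_in01 _ Hy1). pose proof (inv_in01 _ Hy2).
  assert (ER : Re (Copp k) = - Re k) by reflexivity.
  assert (EI : Im (Copp k) = - Im k) by reflexivity.
  eapply Rle_trans. apply (rpow_lip lam); [auto | lra | lra | rewrite ER; lra].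
  rewrite ER, EI, Rabs_Ropp. lra.
Qed.

Definition rho0 (k : C) : R := Rmax (Rpower (/ 2) (- Re k / 2)) (/ 2).

Lemma rho0_range k : Re k < 0 -> / 2 <= rho0 k < 1.
Proof.
  intros Hk. unfold rho0. split. apply Rmax_r.
  apply Rmax_lub_lt; [|lra].
  unfold Rpower. rewrite <- exp_0. apply exp_increasing.
  rewrite ln_Rinv by lra. pose proof ln_lt_2. 
  assert (0 < - Re k / 2) by lra. nra.
Qed.

Lemma rho0_sq k : Re k < 0 -> Rpower (/ 2) (- Re k) <= rho0 k ^ 2.
Proof.
  intros Hk. replace (- Re k) with (- Re k / 2 + - Re k / 2) by field.
  rewrite Rpower_plus. unfold rho0. simpl. rewrite Rmult_1_r.
  pose proof (Rmax_l (Rpower (/ 2) (- Re k / 2)) (/ 2)).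
  pose proof (Rpower_pos (/ 2) (- Re k / 2)).
  apply Rmult_le_compat; lra.
Qed.

Definition theta (delta : R) : R := Rmax 0 (1 - delta).

Lemma h_pt_bound (h : R -> C) (K delta s : R) (y : nat -> R) j :
  (forall x, x <> 0 -> -1 <= x <= 1 -> Cmod (h x) <= K * exp (Rpower (Rabs x) (delta - 1))) ->
  (s = 1 \/ s = -1) -> 1 < y j ->
  Cmod (h (pt s y j)) <= Rmax K 1 * exp (Rpower (y j) (theta delta)).
Proof.
  intros Hb Hs Hy.
  set (t := sg s j). assert (Ht : t = 1 \/ t = -1) by (apply sg_cases; auto).
  assert (Habs : Rabs (pt s y j) = / y j).
  { unfold pt; fold t. unfold Rdiv. rewrite Rabs_mult.
    rewrite Rabs_pos_eq with (x := / y j) by (left; apply Rinv_0_lt_compat; lra).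
    destruct Ht as [-> | ->]. rewrite Rabs_R1; ring. rewrite Rabs_left by lra; ring. }
  assert (Hne : pt s y j <> 0).
  { unfold pt; fold t. unfold Rdiv. apply Rmult_integral_contrapositive.
    split. destruct Ht as [-> | ->]; lra. apply Rinv_neq_0_compat; lra. }
  assert (Hrange : -1 <= pt s y j <= 1).
  { apply Rabs_le_between. rewrite Habs. pose proof (inv_in01 (y j)). lra. }
  eapply Rle_trans. apply Hb; auto. rewrite Habs.
  assert (E : Rpower (/ y j) (delta - 1) = Rpower (y j) (1 - delta)).
  { unfold Rpower. rewrite ln_Rinv by lra. f_equal. ring. }
  rewrite E.
  assert (Rpower (y j) (1 - delta) <= Rpower (y j) (theta delta)).
  { apply Rle_Rpower; [lra|]. unfold theta. apply Rmax_r. }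
  pose proof (exp_mono _ _ H). pose proof (exp_pos (Rpower (y j) (1 - delta))).
  pose proof (Rmax_l K 1). pose proof (Rmax_r K 1).
  apply Rle_trans with (Rmax K 1 * exp (Rpower (y j) (1 - delta))).
  apply Rmult_le_compat_r; lra.
  apply Rmult_le_compat_l; lra.
Qed.


Lemma asymp (g c p b T : R) : 0 <= g < 1 -> 0 <= c -> 0 <= p -> 0 < b ->
  exists N : nat, forall m : nat, (N <= m)%nat ->
    p * ln (INR m) + c * Rpower (INR m) g - b * INR m <= T.
Proof.
  intros Hg Hc Hp Hb.
  destruct (growth1 (/ 2) (2 * p) (b / 4) ltac:(lra) ltac:(lra) ltac:(lra)) as [X1 [HX1 HX1']].
  destruct (growth1 g c (b / 4) Hg Hc ltac:(lra)) as [X2 [HX2 HX2']].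
  destruct (exists_nat_ge (Rmax (Rmax X1 X2) (- 2 * T / b))) as [N HN].
  exists N. intros m Hm.
  assert (HmN : INR N <= INR m) by (apply le_INR; auto).
  pose proof (Rmax_l (Rmax X1 X2) (- 2 * T / b)). pose proof (Rmax_r (Rmax X1 X2) (- 2 * T / b)).
  pose proof (Rmax_l X1 X2). pose proof (Rmax_r X1 X2).
  set (x := INR m) in *.
  assert (Hx1 : 1 <= x) by lra.
  pose proof (ln_le_pow x (/ 2) ltac:(lra) ltac:(lra)).
  assert (Hl : ln x <= 2 * Rpower x (/ 2)).
  { replace (2 * Rpower x (/ 2)) with (Rpower x (/ 2) / / 2) by (field). auto. }
  specialize (HX1' x ltac:(lra)). specialize (HX2' x ltac:(lra)).
  assert (p * ln x <= b / 4 * x).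
  { apply Rle_trans with (p * (2 * Rpower x (/ 2))). apply Rmult_le_compat_l; auto. lra. }
  assert (- 2 * T / b <= x) by lra.
  assert (- 2 * T <= b * x).
  { apply Rmult_le_reg_r with (/ b). apply Rinv_0_lt_compat; lra.
    replace (b * x * / b) with x by (field; lra). exact H5. }
  lra.
Qed.

Lemma exp_small (D E eta : R) : 0 < D -> 0 < eta -> E <= ln (eta / D) -> D * exp E <= eta.
Proof.
  intros HD He HE. apply exp_mono in HE. rewrite exp_ln in HE by (apply Rdiv_lt_0_compat; lra).
  apply Rmult_le_reg_r with (/ D). apply Rinv_0_lt_compat; lra.
  replace (D * exp E * / D) with (exp E) by (field; lra). exact HE.
Qed.


Definition muK (k : C) : R := (1 + / rho0 k) / 2.

Lemma muK_range k : Re k < 0 -> 1 < muK k <= 3 / 2 /\ rho0 k * muK k < 1.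
Proof.
  intros Hk. pose proof (rho0_range k Hk). unfold muK.
  assert (1 < / rho0 k). { rewrite <- Rinv_1. apply Rinv_lt_contravar; lra. }
  assert (/ rho0 k <= 2). { replace 2 with (/ / 2) by field. apply Rinv_le_contravar; lra. }
  split; [lra|].
  replace (rho0 k * ((1 + / rho0 k) / 2)) with ((rho0 k + 1) / 2) by (field; lra). lra.
Qed.

Lemma core_fixed (k : C) (f h : R -> C) (s : R) (y1 y2 : nat -> R) (n1 n2 L N0 : nat) (M Y eta1 : R) :
  Re k < 0 -> Hper f -> Hrel f h k -> (s = 1 \/ s = -1) ->
  chain y1 n1 -> chain y2 n2 -> (L <= N0)%nat -> (N0 <= n1)%nat -> (N0 <= n2)%nat ->
  (forall j, (j < N0)%nat -> Int_part (y1 j) = Int_part (y2 j)) ->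
  0 <= M -> 1 <= Y -> 0 <= eta1 ->
  (forall j, (j <= n1)%nat -> Cmod (h (pt s y1 j)) <= M * muK k ^ j) ->
  (forall j, (j <= n2)%nat -> Cmod (h (pt s y2 j)) <= M * muK k ^ j) ->
  (forall j, (j < L)%nat -> y1 j <= Y /\ y2 j <= Y) ->
  (forall j, (j < L)%nat -> Cmod (Cminus (h (pt s y1 j)) (h (pt s y2 j))) <= eta1) ->
  Cmod (Cminus (f (pt s y1 0)) (f (pt s y2 0))) <=
    eta1 / (rho0 k * (1 - rho0 k)) +
    INR L * (INR L * (2 * (- Re k + Rabs (Im k)) * (2 ^ L / 2 ^ N0 * Y)) * (M * muK k ^ L)) +
    2 * ((M / rho0 k / (1 - rho0 k * muK k) + (Cmod (f 1) + Cmod (f (-1))) / rho0 k) * (rho0 k * muK k) ^ L).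
Proof.
  intros Hk Hp Hr Hs Hc1 Hc2 HLN HN1 HN2 HI HM HY He HH1 HH2 HYb Hmod.
  set (rho := rho0 k). set (mu := muK k).
  pose proof (rho0_range k Hk) as Hrho. fold rho in Hrho.
  pose proof (muK_range k Hk) as [Hmu Hrm]. fold rho mu in Hmu, Hrm.
  set (F1 := fun j => f (pt s y1 j)). set (F2 := fun j => f (pt s y2 j)).
  set (H1 := fun j => h (pt s y1 j)). set (H2 := fun j => h (pt s y2 j)).
  set (w1 := wt k y1). set (w2 := wt k y2).
  assert (Hid1 : forall j, (j <= n1)%nat -> F1 j = Cplus (H1 j) (Cmult (w1 j) (F1 (S j)))).
  { intros j Hj. apply (chain_id k f h s y1 n1); auto. }
  assert (Hid2 : forall j, (j <= n2)%nat -> F2 j = Cplus (H2 j) (Cmult (w2 j) (F2 (S j)))).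
  { intros j Hj. apply (chain_id k f h s y2 n2); auto. }
  assert (HP1 : forall j, (j <= n1 + 1)%nat -> rho * Cmod (Pw w1 j) <= rho ^ j).
  { intros j Hj. apply (Pw_bound w1 rho n1); auto; try lra.
    - intros i Hi. apply (wt_le1 k y1 n1 i Hk Hc1). lia.
    - intros i Hi. eapply Rle_trans. apply (wt_prod k y1 n1 i Hk Hc1). lia. apply rho0_sq; auto. }
  assert (HP2 : forall j, (j <= n2 + 1)%nat -> rho * Cmod (Pw w2 j) <= rho ^ j).
  { intros j Hj. apply (Pw_bound w2 rho n2); auto; try lra.
    - intros i Hi. apply (wt_le1 k y2 n2 i Hk Hc2). lia.
    - intros i Hi. eapply Rle_trans. apply (wt_prod k y2 n2 i Hk Hc2). lia. apply rho0_sq; auto. }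
  set (C0 := Cmod (f 1) + Cmod (f (-1))).
  assert (HC0 : 0 <= C0) by (unfold C0; pose proof (Cmod_ge_0 (f 1)); pose proof (Cmod_ge_0 (f (-1))); lra).
  assert (HF1end : forall y n, chain y n -> Cmod (f (pt s y (S n))) <= C0).
  { intros y n [_ [_ [_ E]]]. unfold pt. rewrite E.
    destruct (sg_cases s (S n) Hs) as [-> | ->]; unfold C0.
    - replace (1 / 1) with 1 by field. pose proof (Cmod_ge_0 (f (-1))). lra.
    - replace (-1 / 1) with (-1) by field. pose proof (Cmod_ge_0 (f 1)). lra. }
  assert (Ht1 := tail_bound F1 H1 w1 n1 rho mu M C0 ltac:(lra) ltac:(lra) Hrm HM HC0 Hid1 HP1 HH1 (HF1end y1 n1 Hc1) L ltac:(lia)).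
  assert (Ht2 := tail_bound F2 H2 w2 n2 rho mu M C0 ltac:(lra) ltac:(lra) Hrm HM HC0 Hid2 HP2 HH2 (HF1end y2 n2 Hc2) L ltac:(lia)).
  assert (Hcl : forall j, (j < L)%nat -> Rabs (/ y1 j - / y2 j) <= 2 ^ L / 2 ^ N0).
  { intros j Hj. pose proof (chain_close y1 n1 y2 n2 N0 Hc1 Hc2 HN1 HN2 HI j ltac:(lia)).
    pose proof (pow_lt 2 N0 ltac:(lra)).
    assert (2 ^ S j <= 2 ^ L) by (apply Rle_pow; [lra | lia]).
    apply Rmult_le_reg_r with (2 ^ N0); auto. field_simplify; lra. }
  set (Om := 2 * (- Re k + Rabs (Im k)) * (2 ^ L / 2 ^ N0 * Y)).
  assert (HOm : forall l, (l < L)%nat -> Cmod (w1 l) <= 1 /\ Cmod (w2 l) <= 1 /\ Cmod (Cminus (w1 l) (w2 l)) <= Om).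
  { intros l Hl. split; [apply (wt_le1 k y1 n1 l Hk Hc1); lia|].
    split; [apply (wt_le1 k y2 n2 l Hk Hc2); lia|].
    destruct (HYb l Hl) as [Hb1 Hb2].
    pose proof (chain_gt1 y1 n1 l Hc1 ltac:(lia)). pose proof (chain_gt1 y2 n2 l Hc2 ltac:(lia)).
    eapply Rle_trans. apply (wt_lip k y1 y2 l (/ Y)); auto.
    apply Rinv_0_lt_compat; lra. apply Rinv_le_contravar; lra. apply Rinv_le_contravar; lra.
    unfold Om. apply Rmult_le_compat_l. pose proof (Rabs_pos (Im k)). lra.
    unfold Rdiv at 1. rewrite Rinv_inv. apply Rmult_le_compat_r; [lra|]. apply Hcl; auto. }
  assert (Hdiff := Pw_diff w1 w2 L Om HOm).
  assert (HOm0 : 0 <= Om).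
  { unfold Om. pose proof (Rabs_pos (Im k)). pose proof (pow_lt 2 L ltac:(lra)). pose proof (pow_lt 2 N0 ltac:(lra)).
    apply Rmult_le_pos. lra. apply Rmult_le_pos; [|lra]. apply Rdiv_le_0_compat; lra. }
  assert (Hfr := front_bound F1 H1 w1 F2 H2 w2 n1 n2 L rho eta1 (INR L * Om * (M * mu ^ L))
     ltac:(lra) He Hid1 Hid2 ltac:(lia) ltac:(lia) Hmod
     ltac:(intros j Hj; apply HP1; lia)).
  unfold F1, F2 in Hfr. simpl in Hfr.
  assert (HZ : forall j, (j < L)%nat -> Cmod (Cminus (Pw w1 j) (Pw w2 j)) * Cmod (H2 j) <= INR L * Om * (M * mu ^ L)).
  { intros j Hj. pose proof (Hdiff j ltac:(lia)). pose proof (HH2 j ltac:(lia)).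
    pose proof (Cmod_ge_0 (Cminus (Pw w1 j) (Pw w2 j))). pose proof (Cmod_ge_0 (H2 j)).
    assert (INR j <= INR L) by (apply le_INR; lia).
    assert (mu ^ j <= mu ^ L) by (apply Rle_pow; [lra|lia]).
    apply Rmult_le_compat; auto. eapply Rle_trans. exact H. apply Rmult_le_compat_r; auto.
    eapply Rle_trans. exact H0. apply Rmult_le_compat_l; auto. }
  specialize (Hfr HZ).
  fold C0. unfold mu, rho in *.
  assert (Cmod (Cmult (Pw w1 L) (F1 L)) + Cmod (Cmult (Pw w2 L) (F2 L)) <=
     2 * ((M / rho0 k / (1 - rho0 k * muK k) + C0 / rho0 k) * (rho0 k * muK k) ^ L)) by lra.
  unfold F1, F2 in H. fold Om. lra.
Qed.


Lemma pow_exp (x : R) (n : nat) : 0 < x -> x ^ n = exp (INR n * ln x).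
Proof. intros. rewrite <- Rpower_pow by auto. reflexivity. Qed.

Lemma half_facts (m : nat) : (4 <= m)%nat ->
  INR (m / 2) <= INR m / 2 /\ INR m / 2 - / 2 <= INR (m / 2) /\ (m / 2 <= m - 2)%nat /\ (m / 2 <= m)%nat.
Proof.
  intros Hm. pose proof (Nat.div_mod m 2 ltac:(lia)). pose proof (Nat.mod_upper_bound m 2 ltac:(lia)).
  assert (H1 : (2 * (m / 2) <= m)%nat) by lia. assert (H2 : (m <= 2 * (m / 2) + 1)%nat) by lia.
  assert (H3 : (m / 2 <= m - 2)%nat) by lia. assert (H4 : (m / 2 <= m)%nat) by lia.
  apply le_INR in H1. apply le_INR in H2. rewrite mult_INR in H1. rewrite plus_INR, mult_INR in H2.
  assert (E2 : INR 2 = 2) by (simpl; lra). rewrite E2 in H1. rewrite E2, INR_1 in H2. repeat split; auto; lra.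
Qed.

Lemma two_ratio (L N0 m : nat) : INR L <= INR m / 2 -> (m <= N0 + 2)%nat ->
  2 ^ L / 2 ^ N0 <= exp (2 * ln 2 - ln 2 / 2 * INR m).
Proof.
  intros HL HN. rewrite !pow_exp by lra. unfold Rdiv. rewrite <- exp_Ropp, <- exp_plus.
  apply exp_mono. apply le_INR in HN. rewrite plus_INR in HN. simpl in HN.
  pose proof ln_lt_2. nra.
Qed.

Lemma Rpower_le_base (x y a : R) : 0 <= a -> 0 < x <= y -> Rpower x a <= Rpower y a.
Proof. intros. apply Rle_Rpower_l; auto. Qed.

Definition gam (delta : R) : R := (1 + delta) * theta delta.

Lemma gam_range delta : 0 < delta -> 0 <= gam delta < 1 /\ 0 <= theta delta.
Proof.
  intros Hd. unfold gam, theta. destruct (Rle_dec 1 delta).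
  - rewrite Rmax_left by lra. lra.
  - rewrite Rmax_right by lra. nra.
Qed.

Lemma ytheta_bound (A delta mu C1 y : R) (m j : nat) :
  0 < delta -> 1 <= A -> 1 < mu -> 0 <= C1 -> (1 <= m)%nat ->
  (forall x, 1 <= x -> Rpower A (theta delta) * Rpower 2 (gam delta) * Rpower x (gam delta) <= ln mu * x + C1) ->
  1 <= y -> y <= A * Rpower (INR (m + j)) (1 + delta) ->
  Rpower y (theta delta) <= Rpower A (theta delta) * Rpower 2 (gam delta) * Rpower (INR m) (gam delta) + ln mu * INR j + C1.
Proof.
  intros Hd HA Hmu HC1 Hm Hg Hy1 Hy.
  destruct (gam_range delta Hd) as [Hga Hth].
  assert (Hm1 : 1 <= INR m) by (apply (le_INR 1); auto).
  assert (Hmj : 0 < INR (m + j)) by (rewrite plus_INR; pose proof (pos_INR j); lra).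
  assert (E : Rpower y (theta delta) <= Rpower A (theta delta) * Rpower (INR (m + j)) (gam delta)).
  { eapply Rle_trans. apply Rpower_le_base; [auto | split; [lra | exact Hy]].
    rewrite <- Rpower_mult_distr by (try lra; apply Rpower_pos).
    rewrite Rpower_mult. unfold gam. lra. }
  assert (Hlnmu : 0 < ln mu) by (rewrite <- ln_1; apply ln_increasing; lra).
  pose proof (Rpower_pos A (theta delta)). pose proof (Rpower_pos 2 (gam delta)).
  pose proof (Rpower_pos (INR m) (gam delta)). pose proof (pos_INR j).
  destruct (Nat.le_gt_cases j m) as [Hjm | Hjm].
  - assert (Rpower (INR (m + j)) (gam delta) <= Rpower 2 (gam delta) * Rpower (INR m) (gam delta)).
    { rewrite Rpower_mult_distr by lra. apply Rpower_le_base; [lra|]. split; auto.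
      rewrite plus_INR. apply le_INR in Hjm. lra. }
    assert (0 <= ln mu * INR j) by nra. nra.
  - assert (Hj1 : 1 <= INR j) by (apply (le_INR 1); lia).
    assert (Rpower (INR (m + j)) (gam delta) <= Rpower 2 (gam delta) * Rpower (INR j) (gam delta)).
    { rewrite Rpower_mult_distr by lra. apply Rpower_le_base; [lra|]. split; auto.
      rewrite plus_INR. assert (INR m <= INR j) by (apply le_INR; lia). lra. }
    specialize (Hg (INR j) Hj1).
    assert (0 <= Rpower A (theta delta) * Rpower 2 (gam delta) * Rpower (INR m) (gam delta)) by
      (apply Rmult_le_pos; [apply Rmult_le_pos|]; lra).
    nra.
Qed.


Definition Hmod (h : R -> C) (delta : R) : Prop :=
  forall eta, 0 < eta -> exists eps0, 0 < eps0 /\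
     forall eps, 0 < eps < eps0 -> forall x y, x <> 0 -> y <> 0 ->
       Rabs (x - y) < exp (- Rpower eps (delta - 1)) -> Rabs x > 2 * eps ->
       Cmod (Cminus (h x) (h y)) <= eta.

Definition Hbd (h : R -> C) (K delta : R) : Prop :=
  forall x, x <> 0 -> -1 <= x <= 1 -> Cmod (h x) <= K * exp (Rpower (Rabs x) (delta - 1)).

Lemma pt_ne0 s y j : (s = 1 \/ s = -1) -> 1 < y j -> pt s y j <> 0.
Proof.
  intros Hs Hy. unfold pt. destruct (sg_cases s j Hs) as [E|E]; rewrite E; unfold Rdiv;
  apply Rmult_integral_contrapositive; split; try lra; apply Rinv_neq_0_compat; lra.
Qed.

Lemma pt_abs s y j : (s = 1 \/ s = -1) -> 1 < y j -> Rabs (pt s y j) = / y j.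
Proof.
  intros Hs Hy. unfold pt. unfold Rdiv. rewrite Rabs_mult.
  rewrite Rabs_pos_eq with (x := / y j) by (left; apply Rinv_0_lt_compat; lra).
  destruct (sg_cases s j Hs) as [E|E]; rewrite E. rewrite Rabs_R1; ring. rewrite Rabs_left by lra; ring.
Qed.

Lemma pt_diff s y1 y2 j : (s = 1 \/ s = -1) -> Rabs (pt s y1 j - pt s y2 j) = Rabs (/ y1 j - / y2 j).
Proof.
  intros Hs. unfold pt, Rdiv. rewrite <- Rmult_minus_distr_l, Rabs_mult.
  destruct (sg_cases s j Hs) as [E|E]; rewrite E. rewrite Rabs_R1; ring. rewrite Rabs_left by lra; ring.
Qed.

Lemma Rpower_eps (Y delta : R) : 0 < delta -> 1 <= Y ->
  Rpower (/ (4 * Y)) (delta - 1) <= Rpower (4 * Y) (theta delta).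
Proof.
  intros Hd HY. unfold Rpower at 1. rewrite ln_Rinv by lra.
  replace ((delta - 1) * - ln (4 * Y)) with ((1 - delta) * ln (4 * Y)) by ring.
  apply Rle_Rpower; [lra|]. unfold theta. apply Rmax_r.
Qed.


Lemma exp_2ln2 : exp (2 * ln 2) = 4.
Proof. replace (2 * ln 2) with (ln 2 + ln 2) by ring. rewrite exp_plus, exp_ln by lra. ring. Qed.

Lemma T2_bound (x L Lk A delta K' C1 Ath g mu N0r D2 : R) :
  1 <= x -> 0 <= L <= x / 2 -> 0 <= Lk -> 1 <= A -> 0 < delta -> 0 < K' -> 1 < mu ->
  0 <= N0r -> N0r <= exp (2 * ln 2 - ln 2 / 2 * x) ->
  D2 = Lk * 4 * (A * Rpower 2 (1 + delta)) * (K' * exp C1) ->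
  L * (L * (Lk * (N0r * (A * Rpower (2 * x) (1 + delta)))) * (K' * exp (Ath * Rpower x g + C1) * exp (L * ln mu)))
  <= D2 * exp ((3 + delta) * ln x + Ath * Rpower x g - (ln 2 - ln mu) / 2 * x).
Proof.
  intros Hx HL HLk HA Hd HK Hmu HN0 HN0' HD2.
  assert (Hlm : 0 < ln mu) by (rewrite <- ln_1; apply ln_increasing; lra).
  set (P := Rpower (2 * x) (1 + delta)).
  assert (HP : 0 < P) by apply Rpower_pos.
  set (Q := K' * exp (Ath * Rpower x g + C1)).
  assert (HQ : 0 < Q) by (unfold Q; pose proof (exp_pos (Ath * Rpower x g + C1)); nra).
  pose proof (exp_pos (L * ln mu)). pose proof (exp_pos (x / 2 * ln mu)).
  pose proof (exp_pos (2 * ln 2 - ln 2 / 2 * x)).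
  assert (Step : L * (L * (Lk * (N0r * (A * P))) * (Q * exp (L * ln mu))) <=
                 x * (x * (Lk * (exp (2 * ln 2 - ln 2 / 2 * x) * (A * P))) * (Q * exp (x / 2 * ln mu)))).
  { assert (exp (L * ln mu) <= exp (x / 2 * ln mu)) by (apply exp_mono; nra).
    assert (0 <= A * P) by nra.
    assert (0 <= N0r * (A * P)) by nra.
    assert (N0r * (A * P) <= exp (2 * ln 2 - ln 2 / 2 * x) * (A * P)) by (apply Rmult_le_compat_r; lra).
    assert (0 <= Lk * (N0r * (A * P))) by nra.
    assert (Lk * (N0r * (A * P)) <= Lk * (exp (2 * ln 2 - ln 2 / 2 * x) * (A * P))) by (apply Rmult_le_compat_l; lra).
    assert (0 <= L * (Lk * (N0r * (A * P)))) by nra.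
    assert (L * (Lk * (N0r * (A * P))) <= x * (Lk * (exp (2 * ln 2 - ln 2 / 2 * x) * (A * P))))
      by (apply Rmult_le_compat; lra).
    assert (L * (Lk * (N0r * (A * P))) * (Q * exp (L * ln mu)) <=
            x * (Lk * (exp (2 * ln 2 - ln 2 / 2 * x) * (A * P))) * (Q * exp (x / 2 * ln mu)))
      by (apply Rmult_le_compat; try nra).
    assert (0 <= L * (Lk * (N0r * (A * P))) * (Q * exp (L * ln mu))) by (apply Rmult_le_pos; nra).
    apply Rmult_le_compat; try lra. }
  replace (L * (L * (Lk * (N0r * (A * Rpower (2 * x) (1 + delta)))) *
           (K' * exp (Ath * Rpower x g + C1) * exp (L * ln mu))))
    with (L * (L * (Lk * (N0r * (A * P))) * (Q * exp (L * ln mu)))) by (unfold P, Q; ring).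
  eapply Rle_trans. exact Step. right.
  assert (EP : P = Rpower 2 (1 + delta) * exp ((1 + delta) * ln x)).
  { unfold P. rewrite <- Rpower_mult_distr by lra. reflexivity. }
  assert (Ex : x = exp (ln x)) by (rewrite exp_ln; lra).
  assert (E4 : exp (2 * ln 2 - ln 2 / 2 * x) = 4 * exp (- (ln 2 / 2 * x))).
  { unfold Rminus. rewrite exp_plus, exp_2ln2. reflexivity. }
  assert (EQ : Q = K' * exp C1 * exp (Ath * Rpower x g)).
  { unfold Q. rewrite exp_plus. ring. }
  assert (Etot : exp ((3 + delta) * ln x + Ath * Rpower x g - (ln 2 - ln mu) / 2 * x) =
     exp (ln x) * exp (ln x) * exp ((1 + delta) * ln x) * exp (- (ln 2 / 2 * x)) *
     exp (Ath * Rpower x g) * exp (x / 2 * ln mu)).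
  { rewrite <- !exp_plus. f_equal. field. }
  rewrite HD2, EP, E4, EQ, Etot. rewrite <- Ex. ring.
Qed.

Lemma rL_bound (r x L : R) : 0 < r < 1 -> x / 2 - / 2 <= L ->
  exp (L * ln r) <= exp (- ln r / 2) * exp (ln r / 2 * x).
Proof.
  intros Hr HL. rewrite <- exp_plus. apply exp_mono.
  assert (ln r < 0) by (rewrite <- ln_1; apply ln_increasing; lra). nra.
Qed.


Theorem core (k : C) (delta : R) (f h : R -> C) (K A : R) :
  Re k < 0 -> 0 < delta -> Hper f -> Hrel f h k -> Hmod h delta -> Hbd h K delta -> 1 <= A ->
  forall eta, 0 < eta -> exists M0 : nat, forall m : nat, (M0 <= m)%nat ->
  forall (s : R) (y1 y2 : nat -> R) (n1 n2 N0 : nat), (s = 1 \/ s = -1) ->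
  chain y1 n1 -> chain y2 n2 -> (N0 <= n1)%nat -> (N0 <= n2)%nat -> (m <= N0 + 2)%nat ->
  (forall j, (j < N0)%nat -> Int_part (y1 j) = Int_part (y2 j)) ->
  (forall j, (j <= n1)%nat -> y1 j <= A * Rpower (INR (m + j)) (1 + delta)) ->
  (forall j, (j <= n2)%nat -> y2 j <= A * Rpower (INR (m + j)) (1 + delta)) ->
  Cmod (Cminus (f (pt s y1 0)) (f (pt s y2 0))) <= eta.
Proof.
  intros Hk Hd Hp Hr Hmd Hbd HA eta Heta.
  set (rho := rho0 k). set (mu := muK k). set (r := rho * mu).
  pose proof (rho0_range k Hk) as Hrho. fold rho in Hrho.
  pose proof (muK_range k Hk) as [Hmu Hrm]. fold rho mu in Hmu, Hrm. fold r in Hrm.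
  assert (Hr0 : 0 < r) by (unfold r; nra).
  destruct (gam_range delta Hd) as [Hg Hth].
  set (th := theta delta) in *. set (g := gam delta) in *.
  set (Ath := Rpower A th * Rpower 2 g).
  assert (HAth : 0 <= Ath) by (unfold Ath; pose proof (Rpower_pos A th); pose proof (Rpower_pos 2 g); nra).
  assert (Hlm : 0 < ln mu) by (rewrite <- ln_1; apply ln_increasing; lra).
  destruct (growth2 g Ath (ln mu) Hg HAth Hlm) as [C1 [HC1 Hgr]].
  set (K' := Rmax K 1). assert (HK' : 1 <= K') by apply Rmax_r.
  set (eta1 := eta / 2 * (rho * (1 - rho))).
  assert (He1 : 0 < eta1) by (unfold eta1; apply Rmult_lt_0_compat; nra).
  destruct (Hmd eta1 He1) as [eps0 [Heps0 Hmd']].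
  set (Lk := 2 * (- Re k + Rabs (Im k))).
  assert (HLk : 0 < Lk) by (unfold Lk; pose proof (Rabs_pos (Im k)); lra).
  set (C0 := Cmod (f 1) + Cmod (f (-1))).
  assert (HC0 : 0 <= C0) by (unfold C0; pose proof (Cmod_ge_0 (f 1)); pose proof (Cmod_ge_0 (f (-1))); lra).
  set (c3 := Rpower (4 * A * Rpower 2 (1 + delta)) th).
  assert (Hc3 : 0 <= c3) by (left; apply Rpower_pos).
  assert (Hln2 : 0 < ln 2) by (pose proof ln_lt_2; lra).
  assert (Hlnr : ln r < 0) by (rewrite <- ln_1; apply ln_increasing; lra).
  assert (Hmu2 : ln mu < ln 2) by (apply ln_increasing; lra).
  destruct (asymp g c3 0 (ln 2 / 2) (-1 - 2 * ln 2) Hg Hc3 ltac:(lra) ltac:(lra)) as [N1 HN1].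
  set (D2 := Lk * 4 * (A * Rpower 2 (1 + delta)) * (K' * exp C1)).
  assert (HD2 : 0 < D2).
  { unfold D2. pose proof (Rpower_pos 2 (1 + delta)). pose proof (exp_pos C1).
    apply Rmult_lt_0_compat; [apply Rmult_lt_0_compat; [lra|nra]|nra]. }
  destruct (asymp g Ath (3 + delta) ((ln 2 - ln mu) / 2) (ln (eta / 4 / D2)) Hg HAth ltac:(lra) ltac:(lra)) as [N2 HN2].
  set (D3 := 2 * (K' * exp C1) / rho / (1 - r) * exp (- ln r / 2)).
  assert (HD3 : 0 < D3).
  { unfold D3. pose proof (exp_pos C1). pose proof (exp_pos (- ln r / 2)).
    apply Rmult_lt_0_compat; [|lra]. repeat apply Rdiv_lt_0_compat; nra. }
  destruct (asymp g Ath 0 (- ln r / 2) (ln (eta / 8 / D3)) Hg HAth ltac:(lra) ltac:(lra)) as [N3 HN3].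
  set (D4 := (2 * C0 / rho + 1) * exp (- ln r / 2)).
  assert (HD4 : 0 < D4).
  { unfold D4. pose proof (exp_pos (- ln r / 2)). assert (0 <= 2 * C0 / rho) by (apply Rdiv_le_0_compat; lra).
    nra. }
  destruct (asymp 0 0 0 (- ln r / 2) (ln (eta / 8 / D4)) ltac:(lra) ltac:(lra) ltac:(lra) ltac:(lra)) as [N4 HN4].
  destruct (exists_nat_ge (/ (8 * eps0) + 5)) as [N5 HN5].
  exists (Nat.max N1 (Nat.max N2 (Nat.max N3 (Nat.max N4 N5)))).
  intros m Hm s y1 y2 n1 n2 N0 Hs Hc1 Hc2 HN1' HN2' HmN HI Hb1 Hb2.
  specialize (HN1 m ltac:(lia)). specialize (HN2 m ltac:(lia)). specialize (HN3 m ltac:(lia)).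
  specialize (HN4 m ltac:(lia)).
  assert (HmN5 : INR N5 <= INR m) by (apply le_INR; lia).
  set (x := INR m) in *.
  assert (Hinv8 : 0 < / (8 * eps0)) by (apply Rinv_0_lt_compat; lra).
  assert (Hm4 : (4 <= m)%nat).
  { apply INR_le. replace (INR 4) with 4 by (simpl; ring). fold x. lra. }
  assert (Hx1 : 1 <= x) by lra.
  destruct (half_facts m Hm4) as [HL1 [HL2 [HL3 HL4]]]. fold x in HL1, HL2.
  set (L := (m / 2)%nat) in *.
  set (Y := A * Rpower (2 * x) (1 + delta)).
  assert (HYx : 2 * x <= Y).
  { unfold Y. assert (2 * x <= Rpower (2 * x) (1 + delta)).
    { rewrite <- (Rpower_1 (2 * x)) at 1 by lra. apply Rle_Rpower; lra. }
    nra. }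
  assert (HY1 : 1 <= Y) by lra.
  set (M := K' * exp (Ath * Rpower x g + C1)).
  assert (HM : 0 <= M) by (unfold M; pose proof (exp_pos (Ath * Rpower x g + C1)); nra).
  assert (HH : forall y n, chain y n -> (forall j, (j <= n)%nat -> y j <= A * Rpower (INR (m + j)) (1 + delta)) ->
            forall j, (j <= n)%nat -> Cmod (h (pt s y j)) <= M * mu ^ j).
  { intros y n Hc Hb j Hj. destruct Hc as [Hc _]. destruct (Hc j Hj) as [_ Hy].
    eapply Rle_trans. apply (h_pt_bound h K delta s y j Hbd Hs Hy). fold th K'.
    pose proof (ytheta_bound A delta mu C1 (y j) m j Hd HA (proj1 Hmu) HC1 ltac:(lia) Hgr ltac:(lra) (Hb j Hj)).
    fold th g x Ath in H.
    unfold M. rewrite Rmult_assoc. apply Rmult_le_compat_l; [lra|].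
    rewrite pow_exp by lra. rewrite <- exp_plus. apply exp_mono. lra. }
  assert (HYb : forall j, (j < L)%nat -> y1 j <= Y /\ y2 j <= Y).
  { intros j Hj.
    assert (Hmj : 0 < INR (m + j) <= 2 * x).
    { rewrite plus_INR. assert (INR j <= x) by (apply le_INR; lia). pose proof (pos_INR j). fold x. lra. }
    assert (Rpower (INR (m + j)) (1 + delta) <= Rpower (2 * x) (1 + delta)) by (apply Rpower_le_base; lra).
    split.
    - eapply Rle_trans. apply Hb1. lia. unfold Y. apply Rmult_le_compat_l; lra.
    - eapply Rle_trans. apply Hb2. lia. unfold Y. apply Rmult_le_compat_l; lra. }
  assert (Hclose : forall j, (j < L)%nat -> Rabs (/ y1 j - / y2 j) <= exp (2 * ln 2 - ln 2 / 2 * x)).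
  { intros j Hj. pose proof (chain_close y1 n1 y2 n2 N0 Hc1 Hc2 HN1' HN2' HI j ltac:(lia)).
    pose proof (pow_lt 2 N0 ltac:(lra)).
    assert (2 ^ S j <= 2 ^ L) by (apply Rle_pow; [lra | lia]).
    eapply Rle_trans. 2: apply (two_ratio L N0 m); auto.
    apply Rmult_le_reg_r with (2 ^ N0); auto. field_simplify; lra. }
  assert (HMod : forall j, (j < L)%nat -> Cmod (Cminus (h (pt s y1 j)) (h (pt s y2 j))) <= eta1).
  { intros j Hj.
    destruct Hc1 as [Hc1a _]. destruct Hc2 as [Hc2a _].
    destruct (Hc1a j ltac:(lia)) as [_ Hy1]. destruct (Hc2a j ltac:(lia)) as [_ Hy2].
    destruct (HYb j Hj) as [HYb1 HYb2].
    apply (Hmd' (/ (4 * Y))).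
    - split. apply Rinv_0_lt_compat; lra.
      assert (E : / eps0 = 8 * / (8 * eps0)) by (field; lra).
      assert (Hie : 0 < / eps0) by (apply Rinv_0_lt_compat; lra).
      apply Rlt_le_trans with (/ / eps0). apply Rinv_lt_contravar. nra. lra.
      rewrite Rinv_inv; lra.
    - apply pt_ne0; auto.
    - apply pt_ne0; auto.
    - rewrite pt_diff by auto. eapply Rle_lt_trans. apply Hclose; auto.
      apply exp_increasing.
      assert (Rpower (/ (4 * Y)) (delta - 1) <= c3 * Rpower x g).
      { eapply Rle_trans. apply Rpower_eps; auto. fold th.
        unfold Y, c3, g, gam.
        replace (4 * (A * Rpower (2 * x) (1 + delta))) with
          ((4 * A * Rpower 2 (1 + delta)) * Rpower x (1 + delta)).
        2:{ rewrite <- (Rpower_mult_distr 2 x) by lra. ring. }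
        rewrite <- Rpower_mult_distr. rewrite Rpower_mult. right. reflexivity.
        pose proof (Rpower_pos 2 (1 + delta)). nra. apply Rpower_pos. }
      lra.
    - rewrite pt_abs by auto. apply Rlt_gt.
      apply Rlt_le_trans with (/ Y). 
      replace (2 * / (4 * Y)) with (/ Y * / 2) by (field; lra).
      assert (0 < / Y) by (apply Rinv_0_lt_compat; lra). lra.
      apply Rinv_le_contravar; lra. }
  pose proof (core_fixed k f h s y1 y2 n1 n2 L N0 M Y eta1 Hk Hp Hr Hs Hc1 Hc2 ltac:(lia) HN1' HN2' HI
     HM HY1 ltac:(lra) (HH y1 n1 Hc1 Hb1) (HH y2 n2 Hc2 Hb2) HYb HMod) as Hcore.
  fold rho mu r C0 Lk in Hcore.
  assert (P1 : eta1 / (rho * (1 - rho)) = eta / 2) by (unfold eta1; field; lra).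
  assert (P2 : INR L * (INR L * (Lk * (2 ^ L / 2 ^ N0 * Y)) * (M * mu ^ L)) <= eta / 4).
  { rewrite (pow_exp mu L) by lra.
    assert (Q1 : 0 <= INR L <= x / 2) by (split; [apply pos_INR | lra]).
    assert (Q2 : 0 < K') by lra.
    assert (Q3 : 0 <= 2 ^ L / 2 ^ N0).
    { apply Rdiv_le_0_compat. apply pow_le; lra. apply pow_lt; lra. }
    assert (Q4 : 2 ^ L / 2 ^ N0 <= exp (2 * ln 2 - ln 2 / 2 * x)) by (apply two_ratio; auto).
    eapply Rle_trans. apply (T2_bound x (INR L) Lk A delta K' C1 Ath g mu (2 ^ L / 2 ^ N0) D2 Hx1 Q1
      ltac:(lra) HA Hd Q2 (proj1 Hmu) Q3 Q4 eq_refl).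
    apply exp_small; auto; try lra. }
  assert (P3 : 2 * ((M / rho / (1 - r) + C0 / rho) * r ^ L) <= eta / 4).
  { rewrite (pow_exp r L) by lra.
    pose proof (rL_bound r x (INR L) ltac:(lra) HL2).
    assert (2 * (M / rho / (1 - r)) * exp (INR L * ln r) <= eta / 8).
    { eapply Rle_trans. apply Rmult_le_compat_l. 
      unfold M. assert (0 <= M / rho / (1 - r)) by (repeat apply Rdiv_le_0_compat; lra). unfold M in H0. lra.
      exact H.
      replace (2 * (M / rho / (1 - r)) * (exp (- ln r / 2) * exp (ln r / 2 * x))) with
        (D3 * exp (0 * ln x + Ath * Rpower x g - - ln r / 2 * x)).
      apply exp_small; auto; try lra.
      unfold D3, M.
      assert (Eq3 : 0 * ln x + Ath * Rpower x g - - ln r / 2 * x = Ath * Rpower x g + ln r / 2 * x) by nra.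
      rewrite Eq3. rewrite !exp_plus. field. lra. }
    assert (2 * (C0 / rho) * exp (INR L * ln r) <= eta / 8).
    { eapply Rle_trans. apply Rmult_le_compat_l. 
      assert (0 <= C0 / rho) by (apply Rdiv_le_0_compat; lra). lra.
      exact H.
      apply Rle_trans with (D4 * exp (0 * ln x + 0 * Rpower x 0 - - ln r / 2 * x)).
      replace (0 * ln x + 0 * Rpower x 0 - - ln r / 2 * x) with (ln r / 2 * x) by nra.
      unfold D4. pose proof (exp_pos (- ln r / 2)). pose proof (exp_pos (ln r / 2 * x)).
      assert (0 <= C0 / rho) by (apply Rdiv_le_0_compat; lra).
      replace (2 * C0 / rho) with (2 * (C0 / rho)) by (field; lra). nra.
      apply exp_small; auto; try lra. }
    lra. }
  lra.
Qed.


Definition yv (x : R) (j : nat) : R := match cf_rem x j with Some y => y | None => 1 end.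

Lemma cf_rem_S x j : cf_rem x (S j) =
  match cf_rem x j with
  | None => None
  | Some y => if Req_EM_T (frac_part y) 0 then None else Some (/ frac_part y)
  end.
Proof. reflexivity. Qed.

Lemma cf_none_up x j : cf_rem x j = None -> forall d, cf_rem x (j + d) = None.
Proof.
  intros H d. induction d as [|d IH].
  - now rewrite Nat.add_0_r.
  - rewrite Nat.add_succ_r, cf_rem_S, IH. reflexivity.
Qed.

Lemma cf_some_down x n y j : cf_rem x n = Some y -> (j <= n)%nat -> cf_rem x j = Some (yv x j).
Proof.
  intros H Hj. unfold yv. destruct (cf_rem x j) eqn:E; auto.
  pose proof (cf_none_up x j E (n - j)). replace (j + (n - j))%nat with n in H0 by lia.
  congruence.
Qed.

Lemma cf_struct x n : cf_len x n ->
  (forall j, (j <= n)%nat -> cf_rem x j = Some (yv x j)) /\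
  (forall j, (j < n)%nat -> frac_part (yv x j) <> 0 /\ yv x (S j) = / frac_part (yv x j)) /\
  frac_part (yv x n) = 0 /\ yv x (S n) = 1 /\ cf_rem x (S n) = None.
Proof.
  intros [y [Hy Hf]].
  assert (Hs : forall j, (j <= n)%nat -> cf_rem x j = Some (yv x j)).
  { intros j Hj. apply (cf_some_down x n y j Hy Hj). }
  assert (Hn : yv x n = y). { unfold yv. rewrite Hy. auto. }
  assert (HSn : cf_rem x (S n) = None).
  { rewrite cf_rem_S, Hy. destruct (Req_EM_T (frac_part y) 0); [auto | contradiction]. }
  split; auto. split.
  - intros j Hj. pose proof (Hs (S j) Hj) as H1. rewrite cf_rem_S, (Hs j ltac:(lia)) in H1.
    destruct (Req_EM_T (frac_part (yv x j)) 0) as [E|E]; [discriminate|].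
    split; auto. inversion H1. auto.
  - split. rewrite Hn; auto. split; auto. unfold yv. rewrite HSn. auto.
Qed.

Lemma cf_gt1 x j y : cf_rem x (S j) = Some y -> 1 < y.
Proof.
  rewrite cf_rem_S. destruct (cf_rem x j) as [z|]; [|discriminate].
  destruct (Req_EM_T (frac_part z) 0) as [E|E]; [discriminate|].
  intros H; inversion H. pose proof (base_fp' z).
  assert (0 < frac_part z < 1) by lra.
  rewrite <- Rinv_1. apply Rinv_lt_contravar; lra.
Qed.

Lemma cf_rat x j y : is_rat x -> cf_rem x j = Some y -> is_rat y.
Proof.
  intros Hx. revert y. induction j as [|j IH]; intros y H.
  - simpl in H. inversion H. subst. auto.
  - rewrite cf_rem_S in H. destruct (cf_rem x j) as [z|] eqn:E; [|discriminate].
    destruct (Req_EM_T (frac_part z) 0); [discriminate|]. inversion H.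
    apply is_rat_inv, is_rat_frac. apply IH; auto.
Qed.

Lemma cf_digit_yv x j : cf_rem x j <> None -> cf_digit x j = Int_part (yv x j).
Proof. intros H. unfold cf_digit, yv. destruct (cf_rem x j); [auto | contradiction]. Qed.


Lemma IF_plus_int (y : R) (z : Z) : Int_part (y + IZR z) = (Int_part y + z)%Z /\ frac_part (y + IZR z) = frac_part y.
Proof.
  destruct (Int_part_frac_part_spec (y + IZR z) (Int_part y + z) (frac_part y)) as [H1 H2].
  - apply base_fp'.
  - rewrite plus_IZR. pose proof (Rplus_Int_part_frac_part y). lra.
  - split; auto.
Qed.

Lemma IF_ratio (y : R) : 2 < y -> Int_part (y / (y - 1)) = 1%Z /\ frac_part (y / (y - 1)) = / (y - 1).
Proof.
  intros Hy. destruct (Int_part_frac_part_spec (y / (y - 1)) 1 (/ (y - 1))) as [H1 H2].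
  - split. left; apply Rinv_0_lt_compat; lra. rewrite <- Rinv_1. apply Rinv_lt_contravar; lra.
  - simpl. field. lra.
  - split; auto.
Qed.

Definition yhat (x : R) (j : nat) : R :=
  if Z_lt_dec (Int_part x) 0 then
    if Z.eq_dec (Int_part (yv x 1)) 1 then
      match j with O => 1 + yv x 2 | S _ => yv x (j + 2) end
    else
      match j with O => yv x 1 / (yv x 1 - 1) | S O => yv x 1 - 1 | _ => yv x j end
  else yv x (S j).

Definition shat (x : R) : R := if Z_lt_dec (Int_part x) 0 then -1 else 1.

Definition nhat (x : R) (n : nat) : nat :=
  if Z_lt_dec (Int_part x) 0 then
    (if Z.eq_dec (Int_part (yv x 1)) 1 then (n - 2)%nat else n)
  else (n - 1)%nat.

Lemma yv0 x : yv x 0 = x.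
Proof. reflexivity. Qed.

Lemma cf_basic x n : is_rat x -> cf_len x n ->
  (forall j, (j <= n)%nat -> is_rat (yv x j)) /\
  (forall j, (1 <= j <= n)%nat -> 1 < yv x j) /\
  (forall j, (j < n)%nat -> frac_part (yv x j) <> 0 /\ yv x (S j) = / frac_part (yv x j) /\
                            frac_part (yv x j) = / yv x (S j)) /\
  frac_part (yv x n) = 0 /\ yv x (S n) = 1.
Proof.
  intros Hx Hc. destruct (cf_struct x n Hc) as [S1 [S2 [S3 [S4 S5]]]].
  split; [|split; [|split]]; auto.
  - intros j Hj. apply (cf_rat x j); auto.
  - intros j Hj. destruct j as [|j]; [lia|]. apply (cf_gt1 x j). apply S1. lia.
  - intros j Hj. destruct (S2 j Hj) as [H1 H2]. split; auto. split; auto.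
    rewrite H2, Rinv_inv. auto.
Qed.

Lemma yhat_chain x n : is_rat x -> cf_len x n -> (3 <= n)%nat -> chain (yhat x) (nhat x n).
Proof.
  intros Hx Hc Hn. destruct (cf_basic x n Hx Hc) as [R1 [R2 [R3 [R4 R5]]]].
  assert (R3' : forall j, (j < n)%nat -> frac_part (yv x j) <> 0 /\ yv x (S j) = / frac_part (yv x j))
    by (intros j Hj; destruct (R3 j Hj) as [? [? _]]; auto).
  unfold chain, yhat, nhat.
  destruct (Z_lt_dec (Int_part x) 0) as [Hneg|Hpos].
  - destruct (Z.eq_dec (Int_part (yv x 1)) 1) as [Hb1|Hb1].
    + split; [|split; [|split]].
      * intros j Hj. destruct j as [|j].
        -- split. apply is_rat_plus. apply is_rat_1. apply R1; lia. pose proof (R2 2%nat ltac:(lia)). lra.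
        -- split. apply R1; lia. apply R2; lia.
      * intros j Hj. destruct j as [|j].
        -- destruct (IF_plus_int (yv x 2) 1) as [_ E]. rewrite Rplus_comm, E.
           simpl (1 + 2)%nat. destruct (R3 2%nat ltac:(lia)) as [? [? _]]. split; auto.
        -- replace (S (S j) + 2)%nat with (S (S j + 2)) by lia. apply R3'. lia.
      * destruct (n - 2)%nat as [|n'] eqn:En; [lia|].
        replace (S n' + 2)%nat with n by lia. auto.
      * replace (S (n - 2) + 2)%nat with (S n) by lia. auto.
    + assert (Hy1 : 1 < yv x 1) by (apply R2; lia).
      assert (HI1 : (2 <= Int_part (yv x 1))%Z).
      { pose proof (Int_part_ge1 (yv x 1) ltac:(lra)). lia. }
      assert (Hy2 : 2 < yv x 1).
      { destruct (R3 1%nat ltac:(lia)) as [Hf _].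
        pose proof (Rplus_Int_part_frac_part (yv x 1)). apply IZR_le in HI1.
        pose proof (base_fp' (yv x 1)). assert (0 < frac_part (yv x 1)) by lra. lra. }
      split; [|split; [|split]].
      * intros j Hj. destruct j as [|[|j]].
        -- split. apply is_rat_mult. apply R1; lia. apply is_rat_inv, is_rat_minus. apply R1; lia. apply is_rat_1.
           apply Rmult_lt_reg_r with (yv x 1 - 1). lra. unfold Rdiv. rewrite Rmult_assoc, Rinv_l by lra. lra.
        -- split. apply is_rat_minus. apply R1; lia. apply is_rat_1. lra.
        -- split. apply R1; lia. apply R2; lia.
      * intros j Hj. destruct j as [|[|j]].
        -- destruct (IF_ratio (yv x 1) Hy2) as [_ E]. rewrite E. split.
           apply Rinv_neq_0_compat; lra. rewrite Rinv_inv; auto.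
        -- destruct (IF_plus_int (yv x 1) (-1)) as [_ E].
           replace (yv x 1 - 1) with (yv x 1 + IZR (-1)) by (simpl; ring). rewrite E.
           destruct (R3 1%nat ltac:(lia)) as [? [? _]]. split; auto.
        -- apply R3'. lia.
      * destruct n as [|[|[|n]]]; try lia. auto.
      * destruct n as [|[|[|n]]]; try lia. auto.
  - split; [|split; [|split]].
    + intros j Hj. split. apply R1; lia. apply R2; lia.
    + intros j Hj. apply R3'. lia.
    + replace (S (n - 1)) with n by lia. auto.
    + replace (S (S (n - 1))) with (S n) by lia. auto.
Qed.

Lemma shat_cases x : shat x = 1 \/ shat x = -1.
Proof. unfold shat. destruct (Z_lt_dec (Int_part x) 0); auto. Qed.

Lemma f_yhat (f : R -> C) x n : Hper f -> is_rat x -> cf_len x n -> (3 <= n)%nat ->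
  f x = f (pt (shat x) (yhat x) 0).
Proof.
  intros Hp Hx Hc Hn. destruct (cf_basic x n Hx Hc) as [R1 [R2 [R3 [R4 R5]]]].
  destruct (R3 0%nat ltac:(lia)) as [Hf0 [_ Hf0']]. rewrite yv0 in Hf0, Hf0'.
  pose proof (base_fp' x) as Hfb. assert (Hfp : 0 < frac_part x) by lra.
  assert (Hxr : is_rat (frac_part x)) by (apply is_rat_frac; auto).
  pose proof (Rplus_Int_part_frac_part x) as Hd.
  unfold pt, sg, shat, yhat. simpl pow. rewrite Rmult_1_r.
  destruct (Z_lt_dec (Int_part x) 0) as [Hneg|Hpos].
  - assert (Ex : x = (frac_part x - 1) - INR (Z.to_nat (- Int_part x - 1))).
    { rewrite INR_IZR_INZ, Znat.Z2Nat.id by lia. rewrite minus_IZR, opp_IZR. simpl. lra. }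
    rewrite Ex at 1. rewrite shift_neg; auto.
    2:{ apply is_rat_minus; auto. apply is_rat_1. }
    2:{ lra. }
    rewrite Hf0'.
    destruct (Z.eq_dec (Int_part (yv x 1)) 1) as [Hb1|Hb1].
    + destruct (R3 1%nat ltac:(lia)) as [_ [_ Hf1]].
      pose proof (Rplus_Int_part_frac_part (yv x 1)) as Hd1. rewrite Hb1, Hf1 in Hd1.
      pose proof (R2 2%nat ltac:(lia)).
      f_equal. rewrite Hd1. simpl. field. split; lra.
    + pose proof (R2 1%nat ltac:(lia)).
      f_equal. field. split; lra.
  - assert (Ex : x = frac_part x + INR (Z.to_nat (Int_part x))).
    { rewrite INR_IZR_INZ, Znat.Z2Nat.id by lia. lra. }
    rewrite Ex at 1. rewrite shift_pos; auto. rewrite Hf0'. f_equal. field.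
    pose proof (R2 1%nat ltac:(lia)). lra.
Qed.

Lemma yhat_agree x1 x2 n1 n2 m : is_rat x1 -> is_rat x2 -> cf_len x1 n1 -> cf_len x2 n2 ->
  (3 <= m)%nat -> (m <= n1)%nat -> (m <= n2)%nat ->
  (forall j, (j <= m)%nat -> Int_part (yv x1 j) = Int_part (yv x2 j)) ->
  shat x1 = shat x2 /\ (forall j, (j < m - 2)%nat -> Int_part (yhat x1 j) = Int_part (yhat x2 j)).
Proof.
  intros Hx1 Hx2 Hc1 Hc2 Hm Hn1 Hn2 HI.
  destruct (cf_basic x1 n1 Hx1 Hc1) as [A1 [B1 [C1 [D1 E1]]]].
  destruct (cf_basic x2 n2 Hx2 Hc2) as [A2 [B2 [C2 [D2 E2]]]].
  pose proof (HI 0%nat ltac:(lia)) as H0. rewrite !yv0 in H0.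
  pose proof (HI 1%nat ltac:(lia)) as H1.
  unfold shat, yhat. rewrite H0, H1.
  destruct (Z_lt_dec (Int_part x2) 0) as [Hneg|Hpos]; split; auto.
  - destruct (Z.eq_dec (Int_part (yv x2 1)) 1) as [Hb1|Hb1].
    + intros j Hj. destruct j as [|j].
      * destruct (IF_plus_int (yv x1 2) 1) as [E1' _]. destruct (IF_plus_int (yv x2 2) 1) as [E2' _].
        rewrite !(Rplus_comm 1). simpl IZR in E1', E2'. rewrite E1', E2'. rewrite (HI 2%nat); auto. lia.
      * apply HI. lia.
    + assert (Hbig : forall x n, cf_len x n -> is_rat x -> (3 <= n)%nat -> Int_part (yv x 1) <> 1%Z -> 2 < yv x 1).
      { intros x n Hc Hx Hn Hb.
        destruct (cf_basic x n Hx Hc) as [_ [B [C _]]].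
        assert (Hy1 : 1 < yv x 1) by (apply B; lia).
        assert (HI1 : (2 <= Int_part (yv x 1))%Z).
        { pose proof (Int_part_ge1 (yv x 1) ltac:(lra)). lia. }
        destruct (C 1%nat ltac:(lia)) as [Hf _].
        pose proof (Rplus_Int_part_frac_part (yv x 1)). apply IZR_le in HI1.
        pose proof (base_fp' (yv x 1)). assert (0 < frac_part (yv x 1)) by lra. lra. }
      intros j Hj. destruct j as [|[|j]].
      * rewrite (proj1 (IF_ratio (yv x1 1) (Hbig x1 n1 Hc1 Hx1 ltac:(lia) ltac:(rewrite H1; auto)))).
        rewrite (proj1 (IF_ratio (yv x2 1) (Hbig x2 n2 Hc2 Hx2 ltac:(lia) Hb1))). auto.
      * replace (yv x1 1 - 1) with (yv x1 1 + IZR (-1)) by (simpl; ring).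
        replace (yv x2 1 - 1) with (yv x2 1 + IZR (-1)) by (simpl; ring).
        rewrite (proj1 (IF_plus_int _ _)), (proj1 (IF_plus_int (yv x2 1) _)). rewrite H1. auto.
      * apply HI. lia.
  - intros j Hj. apply HI. lia.
Qed.

Lemma yhat_bound x n : is_rat x -> cf_len x n -> (3 <= n)%nat ->
  forall j, (j <= nhat x n)%nat -> exists i, (1 <= i)%nat /\ (i <= j + 2)%nat /\ (i <= n)%nat /\ yhat x j <= yv x i + 1.
Proof.
  intros Hx Hc Hn j Hj. destruct (cf_basic x n Hx Hc) as [R1 [R2 [R3 [R4 R5]]]].
  unfold nhat, yhat in *.
  destruct (Z_lt_dec (Int_part x) 0) as [Hneg|Hpos].
  - destruct (Z.eq_dec (Int_part (yv x 1)) 1) as [Hb1|Hb1].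
    + destruct j as [|j].
      * exists 2%nat. repeat split; try lia. lra.
      * exists (S j + 2)%nat. repeat split; try lia. lra.
    + destruct j as [|[|j]].
      * exists 1%nat. repeat split; try lia.
        assert (Hy1 : 1 < yv x 1) by (apply R2; lia).
        assert (HI1 : (2 <= Int_part (yv x 1))%Z).
        { pose proof (Int_part_ge1 (yv x 1) ltac:(lra)). lia. }
        apply IZR_le in HI1. pose proof (base_int_part_le := base_Int_part (yv x 1)).
        destruct base_int_part_le as [Hb _].
        assert (2 <= yv x 1) by lra.
        apply Rle_trans with 2; [|lra].
        unfold Rdiv. apply Rmult_le_reg_r with (yv x 1 - 1). lra.
        rewrite Rmult_assoc, Rinv_l by lra. lra.
      * exists 1%nat. repeat split; try lia. lra.
      * exists (S (S j)). repeat split; try lia. lra.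
  - exists (S j). repeat split; try lia. lra.
Qed.


Lemma yv_digit_bound B x n i : inT B x -> cf_len x n -> (1 <= i <= n)%nat ->
  yv x i <= Rmax B (INR i * ln (INR i) ^ 2) + 1.
Proof.
  intros HT Hc Hi. destruct (cf_struct x n Hc) as [S1 _].
  assert (Hne : cf_rem x i <> None) by (rewrite (S1 i ltac:(lia)); discriminate).
  pose proof (HT i ltac:(lia) Hne) as H. rewrite cf_digit_yv in H by auto.
  destruct (base_Int_part (yv x i)). lra.
Qed.

Lemma ln2_bound (i delta : R) : 1 <= i -> 0 < delta ->
  i * ln i ^ 2 <= 4 / (delta * delta) * Rpower i (1 + delta).
Proof.
  intros Hi Hd.
  pose proof (ln_le_pow i (delta / 2) ltac:(lra) ltac:(lra)).
  assert (0 <= ln i) by (rewrite <- ln_1; apply ln_le; lra).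
  assert (Hsq : ln i ^ 2 <= (Rpower i (delta / 2) / (delta / 2)) ^ 2).
  { simpl. rewrite !Rmult_1_r. apply Rmult_le_compat; lra. }
  assert (E : (Rpower i (delta / 2) / (delta / 2)) ^ 2 = 4 / (delta * delta) * Rpower i delta).
  { assert (Ed : Rpower i delta = Rpower i (delta / 2) * Rpower i (delta / 2)).
    { rewrite <- Rpower_plus. f_equal. field. }
    rewrite Ed. simpl. field. lra. }
  rewrite E in Hsq.
  replace (Rpower i (1 + delta)) with (i * Rpower i delta).
  2:{ rewrite Rpower_plus, Rpower_1 by lra. reflexivity. }
  assert (0 <= 4 / (delta * delta)) by (apply Rdiv_le_0_compat; nra).
  nra.
Qed.

Definition Aconst (delta : R) : R := 3 + 4 / (delta * delta) * Rpower 3 (1 + delta).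

Lemma Aconst_ge1 delta : 0 < delta -> 1 <= Aconst delta.
Proof.
  intros. unfold Aconst. pose proof (Rpower_pos 3 (1 + delta)).
  assert (0 <= 4 / (delta * delta)) by (apply Rdiv_le_0_compat; nra). nra.
Qed.

Lemma main_bound delta (m i j : nat) : 0 < delta -> (1 <= m)%nat -> (1 <= i)%nat -> (i <= j + 2)%nat ->
  Rmax (Rpower (INR m) (1 + delta)) (INR i * ln (INR i) ^ 2) + 2 <= Aconst delta * Rpower (INR (m + j)) (1 + delta).
Proof.
  intros Hd Hm Hi Hij.
  assert (Hm1 : 1 <= INR m) by (apply (le_INR 1); auto).
  assert (Hi1 : 1 <= INR i) by (apply (le_INR 1); auto).
  assert (Hmj : INR m <= INR (m + j)) by (apply le_INR; lia).
  assert (Hij' : INR i <= 3 * INR (m + j)).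
  { apply le_INR in Hij. rewrite plus_INR in *. simpl in Hij. pose proof (pos_INR j). lra. }
  set (P := Rpower (INR (m + j)) (1 + delta)).
  assert (HP1 : 1 <= P) by (apply Rpower_ge1; lra).
  assert (H1 : Rpower (INR m) (1 + delta) <= P) by (apply Rpower_le_base; lra).
  assert (H2 : INR i * ln (INR i) ^ 2 <= 4 / (delta * delta) * Rpower 3 (1 + delta) * P).
  { apply Rle_trans with (4 / (delta * delta) * Rpower (INR i) (1 + delta)); [apply ln2_bound; auto|].
    replace (4 / (delta * delta) * Rpower 3 (1 + delta) * P) with (4 / (delta * delta) * (Rpower 3 (1 + delta) * P)) by ring.
    apply Rmult_le_compat_l. apply Rdiv_le_0_compat; nra.
    unfold P. rewrite Rpower_mult_distr by lra. apply Rpower_le_base; lra. }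
  assert (0 <= 4 / (delta * delta) * Rpower 3 (1 + delta)).
  { pose proof (Rpower_pos 3 (1 + delta)). assert (0 <= 4 / (delta * delta)) by (apply Rdiv_le_0_compat; nra). nra. }
  unfold Aconst. apply Rmax_case_strong; intros; nra.
Qed.


Theorem lemma2p4 (k : C) (delta : R) (f h : R -> C) :
  Re k < 0 -> 0 < delta ->
  (forall x, is_rat x -> ~ (-1 <= x <= 0) -> f x = f (x + 1)) ->
  (forall x, is_rat x -> x <> 0 -> -1 <= x <= 1 ->
     h x = Cminus (f x) (Cmult (rpow_c (Rabs x) (Copp k)) (f (- / x)))) ->
  (forall eta, 0 < eta -> exists eps0, 0 < eps0 /\
     forall eps, 0 < eps < eps0 -> forall x y, x <> 0 -> y <> 0 ->
       Rabs (x - y) < exp (- Rpower eps (delta - 1)) -> Rabs x > 2 * eps ->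
       Cmod (Cminus (h x) (h y)) <= eta) ->
  (exists K, forall x, x <> 0 -> -1 <= x <= 1 ->
     Cmod (h x) <= K * exp (Rpower (Rabs x) (delta - 1))) ->
  propS (1 + delta) f.
Proof.
  intros Hk Hd Hp Hr Hm [K HK] eta Heta.
  destruct (core k delta f h K (Aconst delta) Hk Hd Hp Hr Hm HK (Aconst_ge1 delta Hd) eta Heta) as [M0 HM0].
  exists (Nat.max M0 3). intros m Hmm x x1 x2 HT HV1 HV2.
  destruct HV1 as [Hr1 [HT1 [[n1 [Hn1 Hc1]] Hd1]]].
  destruct HV2 as [Hr2 [HT2 [[n2 [Hn2 Hc2]] Hd2]]].
  assert (Hm3 : (3 <= m)%nat) by lia.
  rewrite (f_yhat f x1 n1 Hp Hr1 Hc1 ltac:(lia)).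
  rewrite (f_yhat f x2 n2 Hp Hr2 Hc2 ltac:(lia)).
  destruct (cf_struct x1 n1 Hc1) as [S1 _]. destruct (cf_struct x2 n2 Hc2) as [S2 _].
  assert (HI : forall j, (j <= m)%nat -> Int_part (yv x1 j) = Int_part (yv x2 j)).
  { intros j Hj. rewrite <- !cf_digit_yv.
    - rewrite (Hd1 j Hj), (Hd2 j Hj). auto.
    - rewrite (S2 j ltac:(lia)); discriminate.
    - rewrite (S1 j ltac:(lia)); discriminate. }
  destruct (yhat_agree x1 x2 n1 n2 m Hr1 Hr2 Hc1 Hc2 Hm3 Hn1 Hn2 HI) as [Hs HIa].
  rewrite <- Hs.
  assert (Hnh : forall z n, (m <= n)%nat -> (m - 2 <= nhat z n)%nat).
  { intros z n Hn. unfold nhat. destruct (Z_lt_dec (Int_part z) 0);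
    [destruct (Z.eq_dec (Int_part (yv z 1)) 1)|]; lia. }
  assert (Hbd : forall z n, is_rat z -> inT (Rpower (INR m) (1 + delta)) z -> cf_len z n -> (m <= n)%nat ->
     forall j, (j <= nhat z n)%nat -> yhat z j <= Aconst delta * Rpower (INR (m + j)) (1 + delta)).
  { intros z n Hx HTx Hcx Hn j Hj.
    destruct (yhat_bound z n Hx Hcx ltac:(lia) j Hj) as [i [Hi1 [Hi2 [Hi3 Hi4]]]].
    pose proof (yv_digit_bound _ z n i HTx Hcx ltac:(lia)).
    pose proof (main_bound delta m i j Hd ltac:(lia) Hi1 Hi2). lra. }
  apply (HM0 m ltac:(lia) (shat x1) (yhat x1) (yhat x2) (nhat x1 n1) (nhat x2 n2) (m - 2)%nat).
  - apply shat_cases.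
  - apply yhat_chain; auto. lia.
  - apply yhat_chain; auto. lia.
  - apply Hnh; auto.
  - apply Hnh; auto.
  - lia.
  - exact HIa.
  - apply Hbd; auto.
  - apply Hbd; auto.
Qed.
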